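(* Assume (C1), (C2), (PQM) and (G). Let $(\overline\Phi,\underline\Phi)$ be a pair of upper and lower solutions of the wave system (W) with $0\le\underline\Phi(t)\le\overline\Phi(t)\le(M_1,M_2,M_3)$ for all $t\in\mathbb R$, let $\Gamma=\{\Phi\in C(\mathbb R,\mathbb R^3):\underline\Phi\le\Phi\le\overline\Phi\}$, and let $0<\mu<\min\{\delta_1,\delta_2,\delta_3\}$. Then: (i) $F(\Gamma)\subset\Gamma$; more precisely, for every $\Phi\in\Gamma$, $\underline\phi\le F_1(\underline\phi,\underline\varphi,\underline\psi)\le F_1(\Phi)\le F_1(\overline\phi,\overline\varphi,\overline\psi)\le\overline\phi$, $\underline\varphi\le F_2(\overline\phi,\underline\varphi,\overline\psi)\le F_2(\Phi)\le F_2(\underline\phi,\overline\varphi,\underline\psi)\le\overline\varphi$, $\underline\psi\le F_3(\underline\phi,\underline\varphi,\underline\psi)\le F_3(\Phi)\le F_3(\overline\phi,\overline\varphi,\overline\psi)\le\overline\psi$; (ii) $F:\Gamma\to B_\mu(\mathbb R,\mathbb R^3)$ is continuous with respect to $|\cdot|_\mu$; (iii) $F:\Gamma\to\Gamma$ is compact, i.e. $F(\Gamma)$ is relatively compact in $(B_\mu(\mathbb R,\mathbb R^3),|\cdot|_\mu)$.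
   Context: Fix $\sigma>0$, $c>0$, $D_1,D_2,D_3>0$, real numbers $r_1,r_2,r_3$, and constants $k_i>0$, $M_i\ge k_i$ ($i=1,2,3$). Let $X=C([-\sigma,0],\mathbb R)$ with the sup norm. For $\Phi=(\phi,\varphi,\psi)\in C(\mathbb R,\mathbb R^3)$ and $s\in\mathbb R$ the history segment is $\Phi_s=(\phi_s,\varphi_s,\psi_s)\in X^3$, $\phi_s(\theta)=\phi(s+\theta)$ for $\theta\in[-\sigma,0]$. For a constant $a$, $\hat a$ is the constant function with value $a$. Functions $f_{1c},f_{2c},f_{3c}:X^3\to\mathbb R$ are given. A triple $(\chi_1,\chi_2,\chi_3)\in X^3$ is admissible if $0\le\chi_j\le M_j$ on $[-\sigma,0]$, $j=1,2,3$. Inequalities between functions are pointwise and componentwise. Wave system (W): $D_1\phi''(t)-c\phi'(t+r_1)+f_{1c}(\Phi_{t+r_1})=0$, $D_2\varphi''(t)-c\varphi'(t+r_2)+f_{2c}(\Phi_{t+r_2})=0$, $D_3\psi''(t)-c\psi'(t+r_3)+f_{3c}(\Phi_{t+r_3})=0$, $t\in\mathbb R$. (C1): $f_{ic}(\hat0,\hat0,\hat0)=f_{ic}(\hat k_1,\hat k_2,\hat k_3)=0$, $i=1,2,3$. (C2): there are $L_1,L_2,L_3>0$ with $|f_{ic}(\Phi)-f_{ic}(\Psi)|\le L_i\|\Phi-\Psi\|$ for all admissible $\Phi,\Psi\in X^3$ ($\|\cdot\|$ the max of the sup norms of the components). (PQM): there are $\beta_1,\beta_2,\beta_3>0$ such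 that for all admissible $(\phi_1,\varphi_1,\psi_1),(\phi_2,\varphi_2,\psi_2)$ with $\phi_2\le\phi_1,\varphi_2\le\varphi_1,\psi_2\le\psi_1$: (P1) $f_{1c}(\phi_1,\varphi_1,\psi_1)-f_{1c}(\phi_2,\varphi_2,\psi_2)+\beta_1[\phi_1(0)-\phi_2(0)]\ge0$; (P2) $f_{2c}(\phi_1,\varphi_1,\psi_1)-f_{2c}(\phi_1,\varphi_2,\psi_1)+\beta_2[\varphi_1(0)-\varphi_2(0)]\ge0$; (P3) $f_{2c}(\phi_1,\varphi_1,\psi_1)\le f_{2c}(\phi_2,\varphi_1,\psi_1)$; (P4) $f_{2c}(\phi_1,\varphi_1,\psi_1)\le f_{2c}(\phi_1,\varphi_1,\psi_2)$; (P5) $f_{3c}(\phi_1,\varphi_1,\psi_1)-f_{3c}(\phi_2,\varphi_2,\psi_2)+\beta_3[\psi_1(0)-\psi_2(0)]\ge0$. $H_i(\Phi)(t)=f_{ic}(\Phi_{t+r_i})+\beta_i\Phi_{(i)}(t+r_i)$ where $\Phi_{(1)}=\phi,\Phi_{(2)}=\varphi,\Phi_{(3)}=\psi$. (G): for each $i$ there is a continuous kernel $G_i:\mathbb R\to[0,\infty)$ with $G_i(\xi)\le K_ie^{-\delta_i|\xi|}$ ($K_i,\delta_i>0$) such that for every bounded continuous $h$, $x=G_i*h$ is the unique bounded solution of $D_ix''(t)-cx'(t+r_i)-\beta_ix(t+r_i)+h(t)=0$. $F_i(\Phi)(t)=\int_{-\infty}^\infty G_i(t-s)H_i(\Phi)(s)ds$,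 $F=(F_1,F_2,F_3)$. Upper/lower solutions: a pair $\overline\Phi=(\overline\phi,\overline\varphi,\overline\psi)$, $\underline\Phi=(\underline\phi,\underline\varphi,\underline\psi)\in C^2(\mathbb R,\mathbb R^3)$, with all components and their first and second derivatives bounded, such that for all $t$: $D_1\overline\phi''(t)-c\overline\phi'(t+r_1)+f_{1c}(\overline\phi_{t+r_1},\overline\varphi_{t+r_1},\overline\psi_{t+r_1})\le0$, $D_2\overline\varphi''(t)-c\overline\varphi'(t+r_2)+f_{2c}(\underline\phi_{t+r_2},\overline\varphi_{t+r_2},\underline\psi_{t+r_2})\le0$, $D_3\overline\psi''(t)-c\overline\psi'(t+r_3)+f_{3c}(\overline\phi_{t+r_3},\overline\varphi_{t+r_3},\overline\psi_{t+r_3})\le0$, $D_1\underline\phi''(t)-c\underline\phi'(t+r_1)+f_{1c}(\underline\phi_{t+r_1},\underline\varphi_{t+r_1},\underline\psi_{t+r_1})\ge0$, $D_2\underline\varphi''(t)-c\underline\varphi'(t+r_2)+f_{2c}(\overline\phi_{t+r_2},\underline\varphi_{t+r_2},\overline\psi_{t+r_2})\ge0$, $D_3\underline\psi''(t)-c\underline\psi'(t+r_3)+f_{3c}(\underline\phi_{t+r_3},\underline\varphi_{t+r_3},\underline\psi_{t+r_3})\ge0$. $B_\mu(\mathbb R,\mathbb R^3)=\{\Phi\in C(\mathbb R,\mathbb R^3):|\Phi|_\mu<\infty\}$, $|\Phi|_\mu=\sup_{t}e^{-\mu|t|}|\Phi(t)|$. *)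

(* Defs.v *)
From Stdlib Require Import Reals.
From Coquelicot Require Import Coquelicot.
Open Scope R_scope.

Record fn3 := mk3 { p1 : R -> R; p2 : R -> R; p3 : R -> R }.

Definition seg (phi : R -> R) (s : R) : R -> R := fun th => phi (s + th).

Definition cst (a : R) : R -> R := fun _ => a.

Definition Xnorm (sigma : R) (chi : R -> R) : R :=
  real (Lub_Rbar (fun x => exists th, -sigma <= th <= 0 /\ x = Rabs (chi th))).

Definition X3dist (sigma : R) (a1 a2 a3 b1 b2 b3 : R -> R) : R :=
  Rmax (Xnorm sigma (fun th => a1 th - b1 th))
    (Rmax (Xnorm sigma (fun th => a2 th - b2 th))
          (Xnorm sigma (fun th => a3 th - b3 th))).

(* An element of X: represented by a continuous function on R (only its
   restriction to [-sigma,0] matters, see [local3]). *)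
Definition contR (chi : R -> R) : Prop := forall x, continuous chi x.

Definition local3 (sigma : R) (f : (R -> R) -> (R -> R) -> (R -> R) -> R) : Prop :=
  forall a1 a2 a3 b1 b2 b3 : R -> R,
    (forall th, -sigma <= th <= 0 -> a1 th = b1 th /\ a2 th = b2 th /\ a3 th = b3 th) ->
    f a1 a2 a3 = f b1 b2 b3.

Definition admissible (sigma M1 M2 M3 : R) (a1 a2 a3 : R -> R) : Prop :=
  contR a1 /\ contR a2 /\ contR a3 /\
  forall th, -sigma <= th <= 0 ->
    (0 <= a1 th <= M1) /\ (0 <= a2 th <= M2) /\ (0 <= a3 th <= M3).

Definition leX (sigma : R) (a b : R -> R) : Prop :=
  forall th, -sigma <= th <= 0 -> a th <= b th.

Definition Ffun := (R -> R) -> (R -> R) -> (R -> R) -> R.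

Definition condC1 (k1 k2 k3 : R) (f : Ffun) : Prop :=
  f (cst 0) (cst 0) (cst 0) = 0 /\ f (cst k1) (cst k2) (cst k3) = 0.

Definition condC2 (sigma M1 M2 M3 L : R) (f : Ffun) : Prop :=
  forall a1 a2 a3 b1 b2 b3 : R -> R,
    admissible sigma M1 M2 M3 a1 a2 a3 -> admissible sigma M1 M2 M3 b1 b2 b3 ->
    Rabs (f a1 a2 a3 - f b1 b2 b3) <= L * X3dist sigma a1 a2 a3 b1 b2 b3.

Definition condPQM (sigma M1 M2 M3 beta1 beta2 beta3 : R) (f1 f2 f3 : Ffun) : Prop :=
  forall a1 a2 a3 b1 b2 b3 : R -> R,
    (* (a1,a2,a3) = (phi1,varphi1,psi1), (b1,b2,b3) = (phi2,varphi2,psi2) *)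
    admissible sigma M1 M2 M3 a1 a2 a3 -> admissible sigma M1 M2 M3 b1 b2 b3 ->
    leX sigma b1 a1 -> leX sigma b2 a2 -> leX sigma b3 a3 ->
    f1 a1 a2 a3 - f1 b1 b2 b3 + beta1 * (a1 0 - b1 0) >= 0 /\
    f2 a1 a2 a3 - f2 a1 b2 a3 + beta2 * (a2 0 - b2 0) >= 0 /\
    f2 a1 a2 a3 <= f2 b1 a2 a3 /\
    f2 a1 a2 a3 <= f2 a1 a2 b3 /\
    f3 a1 a2 a3 - f3 b1 b2 b3 + beta3 * (a3 0 - b3 0) >= 0.

Definition boundedR (u : R -> R) : Prop := exists B, forall t, Rabs (u t) <= B.

Definition conv (G h : R -> R) (t : R) : R :=
  RInt_gen (fun s => G (t - s) * h s) (Rbar_locally m_infty) (Rbar_locally p_infty).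

Definition twice_diff (x : R -> R) : Prop :=
  (forall t, ex_derive x t) /\ (forall t, ex_derive (Derive x) t).

Definition solves (D c r beta : R) (h x : R -> R) : Prop :=
  forall t, D * Derive (Derive x) t - c * Derive x (t + r) - beta * x (t + r) + h t = 0.

Definition kernelG (D c r beta K delta : R) (G : R -> R) : Prop :=
  contR G /\ (forall xi, 0 <= G xi) /\ (forall xi, G xi <= K * exp (- delta * Rabs xi)) /\
  forall h : R -> R, contR h -> boundedR h ->
    (twice_diff (conv G h) /\ boundedR (conv G h) /\ solves D c r beta h (conv G h)) /\
    (forall y, twice_diff y -> boundedR y -> solves D c r beta h y ->
       forall t, y t = conv G h t).

Definition Hop (f : Ffun) (beta r : R) (comp : fn3 -> R -> R) (Phi : fn3) (t : R) : R :=
  f (seg (p1 Phi) (t + r)) (seg (p2 Phi) (t + r)) (seg (p3 Phi) (t + r))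
  + beta * comp Phi (t + r).

Definition Fop (G : R -> R) (f : Ffun) (beta r : R) (comp : fn3 -> R -> R)
  (Phi : fn3) : R -> R := conv G (Hop f beta r comp Phi).

Definition C2bnd (u : R -> R) : Prop :=
  twice_diff u /\ contR (Derive (Derive u)) /\
  boundedR u /\ boundedR (Derive u) /\ boundedR (Derive (Derive u)).

Definition waveop (D c r : R) (f : Ffun) (u : R -> R) (Phi : fn3) (t : R) : R :=
  D * Derive (Derive u) t - c * Derive u (t + r)
  + f (seg (p1 Phi) (t + r)) (seg (p2 Phi) (t + r)) (seg (p3 Phi) (t + r)).

Definition upper_lower (c D1 D2 D3 r1 r2 r3 : R) (f1 f2 f3 : Ffun) (Up Lo : fn3) : Prop :=
  C2bnd (p1 Up) /\ C2bnd (p2 Up) /\ C2bnd (p3 Up) /\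
  C2bnd (p1 Lo) /\ C2bnd (p2 Lo) /\ C2bnd (p3 Lo) /\
  forall t,
    waveop D1 c r1 f1 (p1 Up) Up t <= 0 /\
    waveop D2 c r2 f2 (p2 Up) (mk3 (p1 Lo) (p2 Up) (p3 Lo)) t <= 0 /\
    waveop D3 c r3 f3 (p3 Up) Up t <= 0 /\
    waveop D1 c r1 f1 (p1 Lo) Lo t >= 0 /\
    waveop D2 c r2 f2 (p2 Lo) (mk3 (p1 Up) (p2 Lo) (p3 Up)) t >= 0 /\
    waveop D3 c r3 f3 (p3 Lo) Lo t >= 0.

Definition le3 (A B : fn3) : Prop :=
  forall t, p1 A t <= p1 B t /\ p2 A t <= p2 B t /\ p3 A t <= p3 B t.

Definition cont3 (Phi : fn3) : Prop := contR (p1 Phi) /\ contR (p2 Phi) /\ contR (p3 Phi).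

Definition GammaSet (Lo Up Phi : fn3) : Prop := cont3 Phi /\ le3 Lo Phi /\ le3 Phi Up.

Definition vnorm (a b c : R) : R := Rmax (Rabs a) (Rmax (Rabs b) (Rabs c)).

Definition mu_norm (mu : R) (Phi : fn3) : Rbar :=
  Lub_Rbar (fun x => exists t,
    x = exp (- mu * Rabs t) * vnorm (p1 Phi t) (p2 Phi t) (p3 Phi t)).

Definition sub3 (A B : fn3) : fn3 :=
  mk3 (fun t => p1 A t - p1 B t) (fun t => p2 A t - p2 B t) (fun t => p3 A t - p3 B t).

Definition Bmu (mu : R) (Phi : fn3) : Prop := cont3 Phi /\ is_finite (mu_norm mu Phi).

Definition Fop3 (G1 G2 G3 : R -> R) (f1 f2 f3 : Ffun) (beta1 beta2 beta3 r1 r2 r3 : R)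
  (Phi : fn3) : fn3 :=
  mk3 (Fop G1 f1 beta1 r1 p1 Phi) (Fop G2 f2 beta2 r2 p2 Phi) (Fop G3 f3 beta3 r3 p3 Phi).

(* Main.v *)
Require Import Defs.
From Stdlib Require Import Reals.
From Coquelicot Require Import Coquelicot.
Open Scope R_scope.
From Stdlib Require Import Lra Lia ZArith ClassicalEpsilon Classical.
From Stdlib Require Import Arith.Cantor.
From Coquelicot Require Import Hierarchy.

Lemma ballR (x e y : R) : ball x e y <-> Rabs (y - x) < e.
Proof. reflexivity. Qed.

Lemma filterlim_at_point_self (f : R -> R) (t : R) :
  filterlim f (at_point t) (locally (f t)).
Proof. intros P HP. unfold filtermap, at_point. now apply locally_singleton. Qed.

Lemma exp_lim_m (a t : R) : 0 < a ->
  filterlim (fun s => exp (a * (s - t)) / a) (Rbar_locally m_infty) (locally 0).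
Proof.
  intros Ha. apply filterlim_locally. intros eps. simpl.
  exists (t + ln (eps * a) / a). intros x Hx. rewrite ballR.
  rewrite Rminus_0_r, Rabs_pos_eq.
  2:{ apply Rle_mult_inv_pos; [apply Rlt_le, exp_pos | lra]. }
  assert (Hea : 0 < eps * a) by (apply Rmult_lt_0_compat; [apply cond_pos|lra]).
  apply Rmult_lt_reg_r with a; [lra|]. unfold Rdiv. rewrite Rmult_assoc, Rinv_l by lra.
  rewrite Rmult_1_r. rewrite <- (exp_ln (eps * a)) by lra.
  apply exp_increasing.
  apply Rmult_lt_compat_l with (r := a) in Hx; [|lra].
  replace (a * (t + ln (eps * a) / a)) with (a * t + ln (eps * a)) in Hx by (field; lra).
  lra.
Qed.

Lemma exp_lim_p (a t : R) : 0 < a ->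
  filterlim (fun s => - (exp (- a * (s - t)) / a)) (Rbar_locally p_infty) (locally 0).
Proof.
  intros Ha. apply filterlim_locally. intros eps. simpl.
  exists (t - ln (eps * a) / a). intros x Hx. rewrite ballR.
  rewrite Rminus_0_r, Rabs_Ropp, Rabs_pos_eq.
  2:{ apply Rle_mult_inv_pos; [apply Rlt_le, exp_pos | lra]. }
  assert (Hea : 0 < eps * a) by (apply Rmult_lt_0_compat; [apply cond_pos|lra]).
  apply Rmult_lt_reg_r with a; [lra|]. unfold Rdiv. rewrite Rmult_assoc, Rinv_l by lra.
  rewrite Rmult_1_r. rewrite <- (exp_ln (eps * a)) by lra.
  apply exp_increasing.
  apply Rmult_lt_compat_l with (r := a) in Hx; [|lra].
  replace (a * (t - ln (eps * a) / a)) with (a * t - ln (eps * a)) in Hx by (field; lra).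
  lra.
Qed.

Lemma exp_int (a t : R) : 0 < a ->
  is_RInt_gen (fun s => exp (- a * Rabs (t - s)))
    (Rbar_locally m_infty) (Rbar_locally p_infty) (2 / a).
Proof.
  intros Ha.
  replace (2 / a) with (plus (1/a) (1/a)) by (unfold plus; simpl; field; lra).
  apply (@is_RInt_gen_Chasles R_NormedModule _ _ _ _ _ t).
  - set (F := fun s => exp (a * (s - t)) / a).
    assert (HD : forall x, is_derive F x (exp (a * (x - t)))).
    { intros x. unfold F. auto_derive; auto. unfold Rminus. field. lra. }
    assert (H := @is_RInt_gen_Derive (Rbar_locally m_infty) (at_point t) _ _ F 0 (F t)).
    replace (1 / a) with (F t - 0).
    2:{ unfold F. rewrite Rminus_diag, Rmult_0_r, exp_0. lra. }
    eapply is_RInt_gen_ext; [| apply H].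
    + exists (fun s => s < t) (fun b => b = t).
      * exists t. auto.
      * reflexivity.
      * intros x y Hx Hy z. simpl. subst y. rewrite Rmin_left, Rmax_right by lra.
        intros [H1 H2]. rewrite (is_derive_unique _ _ _ (HD z)).
        f_equal. rewrite Rabs_pos_eq by lra. ring.
    + exists (fun _ => True) (fun _ => True); try apply filter_true.
      intros; eexists; apply HD.
    + exists (fun _ => True) (fun _ => True); try apply filter_true.
      intros x y _ _ z _.
      apply (continuous_ext (T:=R_UniformSpace) (U:=R_UniformSpace) (fun w => exp (a * (w - t)))).
      { intros w. symmetry. apply is_derive_unique, HD. }
      apply (@ex_derive_continuous R_AbsRing R_NormedModule). auto_derive. auto.
    + now apply exp_lim_m.
    + apply filterlim_at_point_self.
  - set (F := fun s => - (exp (- a * (s - t)) / a)).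
    assert (HD : forall x, is_derive F x (exp (- a * (x - t)))).
    { intros x. unfold F. auto_derive; auto. unfold Rminus. field. lra. }
    assert (H := @is_RInt_gen_Derive (at_point t) (Rbar_locally p_infty) _ _ F (F t) 0).
    replace (1 / a) with (0 - F t).
    2:{ unfold F. rewrite Rminus_diag, Rmult_0_r, exp_0. lra. }
    eapply is_RInt_gen_ext; [| apply H].
    + exists (fun b => b = t) (fun s => t < s).
      * reflexivity.
      * exists t. auto.
      * intros x y Hx Hy z. simpl. subst x. rewrite Rmin_left, Rmax_right by lra.
        intros [H1 H2]. rewrite (is_derive_unique _ _ _ (HD z)).
        f_equal. rewrite Rabs_left by lra. ring.
    + exists (fun _ => True) (fun _ => True); try apply filter_true.
      intros; eexists; apply HD.
    + exists (fun _ => True) (fun _ => True); try apply filter_true.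
      intros x y _ _ z _.
      apply (continuous_ext (T:=R_UniformSpace) (U:=R_UniformSpace) (fun w => exp (- a * (w - t)))).
      { intros w. symmetry. apply is_derive_unique, HD. }
      apply (@ex_derive_continuous R_AbsRing R_NormedModule). auto_derive. auto.
    + apply filterlim_at_point_self.
    + now apply exp_lim_p.
Qed.

Definition MI := Rbar_locally m_infty.
Definition PI_ := Rbar_locally p_infty.

Lemma ex_RInt_cont (f : R -> R) a b : (forall x, continuous f x) -> ex_RInt f a b.
Proof. intros Hf. apply (@ex_RInt_continuous R_CompleteNormedModule). intros; apply Hf. Qed.

Lemma RInt_dom (f g : R -> R) (x y : R) :
  (forall z, continuous f z) -> (forall z, continuous g z) ->
  (forall z, Rabs (f z) <= g z) -> Rabs (RInt f x y) <= Rabs (RInt g x y).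
Proof.
  intros Hf Hg Hd.
  assert (K : forall a b, a <= b -> Rabs (RInt f a b) <= RInt g a b).
  { intros a b Hab. eapply Rle_trans. apply abs_RInt_le; [auto | now apply ex_RInt_cont].
    apply RInt_le; [auto | apply (ex_RInt_norm f); now apply ex_RInt_cont |
    now apply ex_RInt_cont | intros; apply Hd]. }
  destruct (Rle_dec x y) as [H|H].
  - eapply Rle_trans. apply K; auto. apply Rle_abs.
  - rewrite <- (opp_RInt_swap f) by (now apply ex_RInt_cont).
    rewrite <- (opp_RInt_swap g) by (now apply ex_RInt_cont).
    change (Rabs (- RInt f y x) <= Rabs (- RInt g y x)).
    rewrite !Rabs_Ropp. eapply Rle_trans. apply K; lra. apply Rle_abs.
Qed.

Lemma dom_ex (f g : R -> R) (lg : R) :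
  (forall z, continuous f z) -> (forall z, continuous g z) ->
  (forall z, Rabs (f z) <= g z) -> is_RInt_gen g MI PI_ lg -> ex_RInt_gen f MI PI_.
Proof.
  intros Hf Hg Hd Hig.
  assert (Hc : exists l, filterlim (fun ab : R * R => RInt f (fst ab) (snd ab))
                 (filter_prod MI PI_) (locally l)).
  { apply (@filterlim_locally_cauchy _ R_CompleteSpace).
    - apply filter_prod_proper; apply Rbar_locally_filter.
    - intros eps.
      assert (He : 0 < eps / 4) by (generalize (cond_pos eps); lra).
      specialize (Hig (ball lg (mkposreal _ He)) (locally_ball _ _)).
      destruct Hig as [Pa Pb [Ma HMa] [Mb HMb] HP].
      set (A0 := Rmin Ma Mb). set (B0 := Rmax Ma Mb).
      exists (fun ab : R * R => fst ab < A0 /\ B0 < snd ab). split.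
      + exists (fun a => a < A0) (fun b => B0 < b).
        * exists A0; auto.
        * exists B0; auto.
        * intros; simpl; auto.
      + intros [a b] [a' b'] [Ha Hb] [Ha' Hb']. simpl in *.
        assert (Pa a /\ Pa a' /\ Pb b /\ Pb b') as [Pa1 [Pa2 [Pb1 Pb2]]].
        { unfold A0, B0 in *. repeat split; [apply HMa|apply HMa|apply HMb|apply HMb];
          try (eapply Rlt_le_trans; [eassumption| apply Rmin_l]);
          try (eapply Rle_lt_trans; [| eassumption]; apply Rmax_r). }
        assert (G : forall u v, Pa u -> Pb v -> Rabs (RInt g u v - lg) < eps / 4).
        { intros u v Hu Hv. destruct (HP u v Hu Hv) as [z [Hz1 Hz2]].
          simpl in Hz1. rewrite (is_RInt_unique _ _ _ _ Hz1). apply Hz2. }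
        rewrite ballR.
        assert (Ef : RInt f a b = RInt f a a' + RInt f a' b' + RInt f b' b).
        { assert (C1 := RInt_Chasles f a a' b' (ex_RInt_cont f _ _ Hf) (ex_RInt_cont f _ _ Hf)).
          assert (C2 := RInt_Chasles f a b' b (ex_RInt_cont f _ _ Hf) (ex_RInt_cont f _ _ Hf)).
          change (RInt f a a' + RInt f a' b' = RInt f a b') in C1.
          change (RInt f a b' + RInt f b' b = RInt f a b) in C2. lra. }
        assert (Eg1 : RInt g a a' = RInt g a b - RInt g a' b).
        { assert (C1 := RInt_Chasles g a a' b (ex_RInt_cont g _ _ Hg) (ex_RInt_cont g _ _ Hg)).
          change (RInt g a a' + RInt g a' b = RInt g a b) in C1. lra. }
        assert (Eg2 : RInt g b' b = RInt g a b - RInt g a b').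
        { assert (C1 := RInt_Chasles g a b' b (ex_RInt_cont g _ _ Hg) (ex_RInt_cont g _ _ Hg)).
          change (RInt g a b' + RInt g b' b = RInt g a b) in C1. lra. }
        assert (D1 := RInt_dom f g a a' Hf Hg Hd).
        assert (D2 := RInt_dom f g b' b Hf Hg Hd).
        rewrite Eg1 in D1. rewrite Eg2 in D2.
        assert (G1 := G a b Pa1 Pb1). assert (G2 := G a' b Pa2 Pb1).
        assert (G3 := G a b' Pa1 Pb2).
        replace (RInt f a' b' - RInt f a b) with (- (RInt f a a' + RInt f b' b)) by (rewrite Ef; ring).
        rewrite Rabs_Ropp. eapply Rle_lt_trans. apply Rabs_triang.
        apply Rabs_def2 in G1. apply Rabs_def2 in G2. apply Rabs_def2 in G3.
        assert (Rabs (RInt g a b - RInt g a' b) < eps/2) by (apply Rabs_def1; lra).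
        assert (Rabs (RInt g a b - RInt g a b') < eps/2) by (apply Rabs_def1; lra).
        lra. }
  destruct Hc as [l Hl]. exists l.
  intros P HP. specialize (Hl P HP). unfold filtermapi.
  eapply filter_imp; [| exact Hl]. intros [a b] H. simpl in *.
  exists (RInt f a b). split; auto. apply (@RInt_correct R_CompleteNormedModule). now apply ex_RInt_cont.
Qed.

Lemma cR_mult (f g : R -> R) x : continuous f x -> continuous g x -> continuous (fun y => f y * g y) x.
Proof. apply (@continuous_mult R_UniformSpace R_AbsRing). Qed.
Lemma cR_plus (f g : R -> R) x : continuous f x -> continuous g x -> continuous (fun y => f y + g y) x.
Proof. apply (@continuous_plus R_UniformSpace R_AbsRing R_NormedModule). Qed.
Lemma cR_minus (f g : R -> R) x : continuous f x -> continuous g x -> continuous (fun y => f y - g y) x.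
Proof. apply (@continuous_minus R_UniformSpace R_AbsRing R_NormedModule). Qed.
Lemma cR_opp (f : R -> R) x : continuous f x -> continuous (fun y => - f y) x.
Proof. apply (@continuous_opp R_UniformSpace R_AbsRing R_NormedModule). Qed.
Lemma cR_comp (f g : R -> R) x : continuous f x -> continuous g (f x) -> continuous (fun y => g (f y)) x.
Proof. apply (@continuous_comp R_UniformSpace R_UniformSpace R_UniformSpace). Qed.
Lemma cR_const (c x : R) : continuous (fun _ : R => c) x.
Proof. apply (@continuous_const R_UniformSpace R_UniformSpace). Qed.
Lemma cR_id (x : R) : continuous (fun y : R => y) x.
Proof. apply (@continuous_id R_UniformSpace). Qed.
Lemma cR_ext (f g : R -> R) x : (forall y, f y = g y) -> continuous f x -> continuous g x.
Proof. apply (@continuous_ext R_UniformSpace R_UniformSpace). Qed.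

Lemma cont_ed (f : R -> R) x :
  continuous f x <-> (forall eps, 0 < eps -> exists d, 0 < d /\ forall y, Rabs (y - x) < d -> Rabs (f y - f x) < eps).
Proof.
  split.
  - intros H eps He. assert (H' := proj2 (continuity_pt_filterlim f x) H).
    apply continuity_pt_locally with (eps := mkposreal _ He) in H'.
    destruct H' as [d Hd]. exists d. split; [apply cond_pos|]. intros y Hy. apply Hd. exact Hy.
  - intros H. apply (proj1 (continuity_pt_filterlim f x)). apply continuity_pt_locally.
    intros eps. destruct (H eps (cond_pos eps)) as [d [Hd H2]].
    exists (mkposreal _ Hd). intros y Hy. apply H2. exact Hy.
Qed.

Lemma cont_pt (f : R -> R) x : continuous f x -> continuity_pt f x.
Proof. intros H. now apply (proj2 (continuity_pt_filterlim f x)). Qed.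

Definition kern (G : R -> R) (K d : R) :=
  contR G /\ (forall xi, 0 <= G xi) /\ (forall xi, G xi <= K * exp (- d * Rabs xi)).

Lemma is_int_scal (f : R -> R) c l : is_RInt_gen f MI PI_ l ->
  is_RInt_gen (fun x => c * f x) MI PI_ (c * l).
Proof. intros H. apply (@is_RInt_gen_scal R_NormedModule); try apply Proper_StrongProper; try apply Rbar_locally_filter; auto. Qed.

Lemma is_int_minus (f g : R -> R) lf lg : is_RInt_gen f MI PI_ lf -> is_RInt_gen g MI PI_ lg ->
  is_RInt_gen (fun x => f x - g x) MI PI_ (lf - lg).
Proof. intros H1 H2. apply (@is_RInt_gen_minus R_NormedModule); try apply Proper_StrongProper; try apply Rbar_locally_filter; auto. Qed.

Lemma is_int_ext (f g : R -> R) l : (forall x, f x = g x) -> is_RInt_gen f MI PI_ l -> is_RInt_gen g MI PI_ l.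
Proof.
  intros E H. apply (@is_RInt_gen_ext R_NormedModule MI PI_) with f; try apply Rbar_locally_filter; auto.
  apply filter_forall. intros; apply E.
Qed.

Lemma is_int_unique (f : R -> R) l : is_RInt_gen f MI PI_ l -> RInt_gen f MI PI_ = l.
Proof. intros H. apply (@is_RInt_gen_unique R_CompleteNormedModule); try apply Proper_StrongProper; try apply Rbar_locally_filter; auto. Qed.

Lemma int_norm (f g : R -> R) lf lg : (forall x, Rabs (f x) <= g x) ->
  is_RInt_gen f MI PI_ lf -> is_RInt_gen g MI PI_ lg -> Rabs lf <= lg.
Proof.
  intros Hd H1 H2. apply (RInt_gen_norm (V:=R_CompleteNormedModule) (Fa:=MI) (Fb:=PI_) f g lf lg); auto.
  - exists (fun x => x < 0) (fun y => 0 < y). exists 0; auto. exists 0; auto.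
    intros; simpl; lra.
  - apply filter_forall. intros; apply Hd.
Qed.

Lemma int_nonneg (f : R -> R) l : (forall x, 0 <= f x) -> is_RInt_gen f MI PI_ l -> 0 <= l.
Proof.
  intros Hp H. assert (K := int_norm f f l l). 
  assert (Rabs l <= l). { apply K; auto. intros x. rewrite Rabs_pos_eq; auto. lra. }
  generalize (Rle_abs l). generalize (Rabs_pos l). lra.
Qed.

Lemma exp_int_K (a t c : R) : 0 < a ->
  is_RInt_gen (fun s => c * exp (- a * Rabs (t - s))) MI PI_ (c * (2 / a)).
Proof. intros Ha. apply is_int_scal. now apply exp_int. Qed.

Lemma cont_kern_prod (G h : R -> R) t : contR G -> contR h ->
  forall z, continuous (fun s => G (t - s) * h s) z.
Proof.
  intros HG Hh z. apply cR_mult; [|apply Hh].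
  apply (cR_comp (fun s => t - s) G). apply cR_minus; [apply cR_const | apply cR_id]. apply HG.
Qed.

Lemma cont_exp_abs (a t c : R) z : continuous (fun s => c * exp (- a * Rabs (t - s))) z.
Proof.
  apply cR_mult; [apply cR_const|].
  apply (cR_comp (fun s => - a * Rabs (t - s)) exp); [| apply continuous_exp].
  apply cR_mult; [apply cR_const|].
  apply (cR_comp (fun s => t - s) Rabs); [| apply continuous_Rabs].
  apply cR_minus; [apply cR_const | apply cR_id].
Qed.

Lemma conv_is (G h : R -> R) K d B t : 0 < d -> kern G K d -> contR h ->
  (forall s, Rabs (h s) <= B) ->
  is_RInt_gen (fun s => G (t - s) * h s) MI PI_ (conv G h t).
Proof.
  intros Hd [HG [HG0 HGK]] Hh HB.
  assert (Ex : ex_RInt_gen (fun s => G (t - s) * h s) MI PI_).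
  { apply (dom_ex _ (fun s => (K * B) * exp (- d * Rabs (t - s))) ((K*B) * (2/d))).
    - now apply cont_kern_prod.
    - intros; apply cont_exp_abs.
    - intros z. rewrite Rabs_mult, (Rabs_pos_eq (G _)) by auto.
      replace (K * B * exp (- d * Rabs (t - z))) with ((K * exp (- d * Rabs (t - z))) * B) by ring.
      apply Rmult_le_compat; auto. apply Rabs_pos.
    - now apply exp_int_K. }
  unfold conv. apply (@RInt_gen_correct R_CompleteNormedModule); try apply Proper_StrongProper; try apply Rbar_locally_filter; auto.
Qed.

Lemma conv_mono (G h1 h2 : R -> R) K d B1 B2 t : 0 < d -> kern G K d -> contR h1 -> contR h2 ->
  (forall s, Rabs (h1 s) <= B1) -> (forall s, Rabs (h2 s) <= B2) ->
  (forall s, h1 s <= h2 s) -> conv G h1 t <= conv G h2 t.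
Proof.
  intros Hd Hk H1 H2 HB1 HB2 Hle.
  assert (I := is_int_minus _ _ _ _ (conv_is G h2 K d B2 t Hd Hk H2 HB2) (conv_is G h1 K d B1 t Hd Hk H1 HB1)).
  apply int_nonneg in I; [lra|]. intros x. destruct Hk as [_ [HG0 _]].
  rewrite <- Rmult_minus_distr_l. apply Rmult_le_pos; auto. specialize (Hle x); lra.
Qed.

Lemma conv_minus (G h1 h2 : R -> R) K d B1 B2 t : 0 < d -> kern G K d -> contR h1 -> contR h2 ->
  (forall s, Rabs (h1 s) <= B1) -> (forall s, Rabs (h2 s) <= B2) ->
  is_RInt_gen (fun s => G (t - s) * (h1 s - h2 s)) MI PI_ (conv G h1 t - conv G h2 t).
Proof.
  intros Hd Hk H1 H2 HB1 HB2.
  assert (I := is_int_minus _ _ _ _ (conv_is G h1 K d B1 t Hd Hk H1 HB1) (conv_is G h2 K d B2 t Hd Hk H2 HB2)).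
  eapply is_int_ext; [| exact I]. intros; simpl; ring.
Qed.

Lemma exp_le (x y : R) : x <= y -> exp x <= exp y.
Proof. intros [H|H]. apply Rlt_le, exp_increasing, H. subst; lra. Qed.

Lemma abs_between (x a : R) : Rabs x <= a -> -a <= x <= a.
Proof. unfold Rabs. destruct (Rcase_abs x); lra. Qed.

Lemma conv_wbound (G h : R -> R) K d B mu A t : 0 < mu -> mu < d -> kern G K d -> contR h ->
  (forall s, Rabs (h s) <= B) -> 0 <= A -> (forall s, Rabs (h s) <= A * exp (mu * Rabs s)) ->
  Rabs (conv G h t) <= A * K * exp (mu * Rabs t) * (2 / (d - mu)).
Proof.
  intros Hmu Hmd Hk Hh HB HA HAs.
  assert (I := conv_is G h K d B t ltac:(lra) Hk Hh HB).
  assert (J := exp_int_K (d - mu) t (A * K * exp (mu * Rabs t)) ltac:(lra)).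
  eapply (int_norm _ _ _ _); [| exact I | exact J].
  intros s. destruct Hk as [_ [HG0 HGK]].
  rewrite Rabs_mult, (Rabs_pos_eq (G _)) by auto.
  eapply Rle_trans. apply Rmult_le_compat; [auto | apply Rabs_pos | apply HGK | apply HAs].
  replace (K * exp (- d * Rabs (t - s)) * (A * exp (mu * Rabs s))) with
     (A * K * exp (- d * Rabs (t - s) + mu * Rabs s)) by (rewrite exp_plus; ring).
  assert (HK : 0 <= K).
  { specialize (HG0 0). specialize (HGK 0). assert (0 < exp (- d * Rabs 0)) by apply exp_pos. nra. }
  replace (A * K * exp (mu * Rabs t) * exp (- (d - mu) * Rabs (t - s))) with
    (A * K * exp (mu * Rabs t + - (d - mu) * Rabs (t - s))) by (rewrite exp_plus; ring).
  apply Rmult_le_compat_l. { apply Rmult_le_pos; auto. }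
  apply exp_le.
  assert (Rabs s <= Rabs t + Rabs (t - s)).
  { replace s with (t - (t - s)) at 1 by ring. eapply Rle_trans. apply Rabs_triang.
    rewrite Rabs_Ropp. lra. }
  nra.
Qed.

Lemma conv_equi (G : R -> R) K d B : 0 < K -> 0 < d -> kern G K d -> 0 <= B ->
  forall eps, 0 < eps -> exists del, 0 < del /\
    forall h, contR h -> (forall s, Rabs (h s) <= B) ->
      forall t t', Rabs (t - t') < del -> Rabs (conv G h t - conv G h t') <= eps.
Proof.
  intros HK Hd Hk HB eps He.
  set (c0 := d / 2).
  set (eta := eps * c0 / (2 * (B + 1))).
  assert (Hc0 : 0 < c0) by (unfold c0; lra).
  assert (Heta : 0 < eta).
  { unfold eta. apply Rmult_lt_0_compat. nra. apply Rinv_0_lt_compat. lra. }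
  set (Q := 2 * K * exp d).
  assert (HQ : 0 < Q) by (unfold Q; generalize (exp_pos d); nra).
  set (S := Rmax 0 (ln (Q / eta) / c0)).
  assert (HS0 : 0 <= S) by apply Rmax_l.
  assert (HS1 : ln (Q / eta) / c0 <= S) by apply Rmax_r.
  assert (Hdec : forall u, S <= u -> Q * exp (- c0 * u) <= eta).
  { intros u Hu. assert (ln (Q / eta) <= c0 * u).
    { apply Rmult_le_reg_r with (/ c0). apply Rinv_0_lt_compat; lra.
      replace (c0 * u * / c0) with u by (field; lra). unfold Rdiv in HS1. lra. }
    assert (exp (ln (Q / eta)) <= exp (c0 * u)) by now apply exp_le.
    rewrite exp_ln in H0. 2:{ apply Rdiv_lt_0_compat; lra. }
    replace (- c0 * u) with (- (c0 * u)) by ring. rewrite exp_Ropp.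
    assert (0 < exp (c0 * u)) by apply exp_pos.
    apply (Rmult_le_reg_r (exp (c0 * u))); auto.
    rewrite Rmult_assoc, Rinv_l, Rmult_1_r by lra.
    replace Q with (eta * (Q / eta)) by (field; lra).
    apply Rmult_le_compat_l; lra. }
  assert (Hcp : forall x, -(S+1) <= x <= S+1 -> continuity_pt G x).
  { intros x _. apply cont_pt. apply Hk. }
  destruct (Heine_cor2 Hcp (mkposreal _ (Rmult_lt_0_compat _ _ Heta (exp_pos (- c0 * S))))) as [del0 Hdel0].
  simpl in Hdel0.
  destruct Hk as [HGc [HG0 HGK]].
  assert (Hpt : forall u u', Rabs (u - u') < Rmin 1 del0 -> Rabs (G u - G u') <= eta * exp (- c0 * Rabs u)).
  { intros u u' Huu.
    assert (H1 : Rabs (u - u') < 1) by (eapply Rlt_le_trans; [exact Huu | apply Rmin_l]).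
    assert (H2 : Rabs (u - u') < del0) by (eapply Rlt_le_trans; [exact Huu | apply Rmin_r]).
    destruct (Rle_dec (Rabs u) S) as [Hu|Hu].
    - assert (Rabs u' <= S + 1).
      { replace u' with (u - (u - u')) by ring. eapply Rle_trans. apply Rabs_triang.
        rewrite Rabs_Ropp. lra. }
      apply Rlt_le. eapply Rlt_le_trans. apply Hdel0; auto.
      + apply abs_between. lra.
      + apply abs_between. lra.
      + apply Rmult_le_compat_l; [lra|]. apply exp_le. nra.
    - assert (Hu' : Rabs u - 1 <= Rabs u').
      { replace u with (u' + (u - u')) at 1 by ring. generalize (Rabs_triang u' (u - u')). lra. }
      assert (E1 : exp (- d * Rabs u') <= exp d * exp (- d * Rabs u)).
      { rewrite <- exp_plus. apply exp_le. nra. }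
      assert (E2 : exp (- d * Rabs u) <= exp d * exp (- d * Rabs u)).
      { rewrite <- exp_plus. apply exp_le. lra. }
      assert (E3 : exp (- d * Rabs u) = exp (- c0 * Rabs u) * exp (- c0 * Rabs u)).
      { rewrite <- exp_plus. f_equal. unfold c0. field. }
      assert (E4 := Hdec (Rabs u) ltac:(lra)).
      assert (Rabs (G u - G u') <= G u + G u').
      { generalize (HG0 u) (HG0 u'). intros. apply Rabs_le. lra. }
      generalize (HGK u) (HGK u'). intros G1 G2.
      assert (P1 : 0 < exp (- c0 * Rabs u)) by apply exp_pos.
      assert (G u + G u' <= Q * exp (- c0 * Rabs u) * exp (- c0 * Rabs u)).
      { rewrite Rmult_assoc, <- E3. unfold Q. nra. }
      nra. }
  exists (Rmin 1 del0). split. { apply Rmin_pos; [lra | apply cond_pos]. }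
  intros h Hh HBh t t' Htt.
  assert (I1 := conv_is G h K d B t Hd (conj HGc (conj HG0 HGK)) Hh HBh).
  assert (I2 := conv_is G h K d B t' Hd (conj HGc (conj HG0 HGK)) Hh HBh).
  assert (I := is_int_minus _ _ _ _ I1 I2).
  assert (J := exp_int_K c0 t (B * eta) Hc0).
  eapply Rle_trans. eapply (int_norm _ _ _ _); [| exact I | exact J].
  - intros s. simpl. rewrite <- Rmult_minus_distr_r, Rabs_mult.
    replace (B * eta * exp (- c0 * Rabs (t - s))) with ((eta * exp (- c0 * Rabs (t - s))) * B) by ring.
    apply Rmult_le_compat; [apply Rabs_pos | apply Rabs_pos | | apply HBh].
    apply Hpt. replace (t - s - (t' - s)) with (t - t') by ring. exact Htt.
  - unfold eta. replace (B * (eps * c0 / (2 * (B + 1))) * (2 / c0)) with (eps * (B / (B + 1))) by (field; lra).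
    assert (B / (B + 1) <= 1). { apply Rmult_le_reg_r with (B + 1); [lra|]. field_simplify; lra. }
    nra.
Qed.

Lemma Xnorm_le sigma chi e : 0 <= e -> (forall th, -sigma <= th <= 0 -> Rabs (chi th) <= e) ->
  Xnorm sigma chi <= e.
Proof.
  intros He H. unfold Xnorm.
  destruct (Lub_Rbar_correct (fun x => exists th, -sigma <= th <= 0 /\ x = Rabs (chi th))) as [Hub Hlub].
  assert (Hb : Rbar_le (Lub_Rbar (fun x => exists th, -sigma <= th <= 0 /\ x = Rabs (chi th))) e).
  { apply Hlub. intros x [th [Hth ->]]. simpl. now apply H. }
  destruct (Lub_Rbar _); simpl in *; auto.
Qed.

Lemma X3dist_le sigma a1 a2 a3 b1 b2 b3 e : 0 <= e ->
  (forall th, -sigma <= th <= 0 -> Rabs (a1 th - b1 th) <= e /\ Rabs (a2 th - b2 th) <= e /\ Rabs (a3 th - b3 th) <= e) ->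
  X3dist sigma a1 a2 a3 b1 b2 b3 <= e.
Proof.
  intros He H. unfold X3dist.
  apply Rmax_lub; [|apply Rmax_lub]; apply Xnorm_le; auto; intros th Hth; apply H; auto.
Qed.

Lemma unif_cont (u : R -> R) a b eta : contR u -> 0 < eta ->
  exists d, 0 < d /\ forall x y, a <= x <= b -> a <= y <= b -> Rabs (x - y) < d -> Rabs (u x - u y) < eta.
Proof.
  intros Hu He.
  assert (Hcp : forall x, a <= x <= b -> continuity_pt u x) by (intros; apply cont_pt, Hu).
  destruct (Heine_cor2 Hcp (mkposreal _ He)) as [d Hd]. exists d. split; [apply cond_pos|]. exact Hd.
Qed.

Lemma seg_cont (u : R -> R) s : contR u -> contR (seg u s).
Proof.
  intros Hu x. unfold seg. apply (cR_comp (fun th => s + th) u).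
  apply cR_plus; [apply cR_const | apply cR_id]. apply Hu.
Qed.

Lemma cst_cont a : contR (cst a).
Proof. intros x. unfold cst. apply cR_const. Qed.

Definition inBox (M1 M2 M3 : R) (Phi : fn3) : Prop :=
  cont3 Phi /\ forall t, (0 <= p1 Phi t <= M1) /\ (0 <= p2 Phi t <= M2) /\ (0 <= p3 Phi t <= M3).

Lemma adm_seg sigma M1 M2 M3 Phi s : inBox M1 M2 M3 Phi ->
  admissible sigma M1 M2 M3 (seg (p1 Phi) s) (seg (p2 Phi) s) (seg (p3 Phi) s).
Proof.
  intros [[H1 [H2 H3]] HB]. split; [|split; [|split]]; try (apply seg_cont; auto).
  intros th _. unfold seg. apply HB.
Qed.

Lemma adm_zero sigma M1 M2 M3 : 0 <= M1 -> 0 <= M2 -> 0 <= M3 ->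
  admissible sigma M1 M2 M3 (cst 0) (cst 0) (cst 0).
Proof.
  intros. split; [|split; [|split]]; try apply cst_cont.
  intros th _. unfold cst. lra.
Qed.

Definition Mx (M1 M2 M3 : R) := Rmax M1 (Rmax M2 M3).

Lemma Mx_ge M1 M2 M3 : M1 <= Mx M1 M2 M3 /\ M2 <= Mx M1 M2 M3 /\ M3 <= Mx M1 M2 M3.
Proof.
  unfold Mx. repeat split. apply Rmax_l.
  eapply Rle_trans; [apply Rmax_l | apply Rmax_r]. eapply Rle_trans; [apply Rmax_r | apply Rmax_r].
Qed.

Lemma f_bound sigma M1 M2 M3 L k1 k2 k3 (f : Ffun) Phi s :
  0 <= M1 -> 0 <= M2 -> 0 <= M3 -> 0 <= L ->
  condC1 k1 k2 k3 f -> condC2 sigma M1 M2 M3 L f -> inBox M1 M2 M3 Phi ->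
  Rabs (f (seg (p1 Phi) s) (seg (p2 Phi) s) (seg (p3 Phi) s)) <= L * Mx M1 M2 M3.
Proof.
  intros HM1 HM2 HM3 HL [H0 _] HC Hb.
  assert (K := HC _ _ _ _ _ _ (adm_seg sigma _ _ _ _ s Hb) (adm_zero sigma _ _ _ HM1 HM2 HM3)).
  rewrite H0, Rminus_0_r in K. eapply Rle_trans; [exact K|].
  apply Rmult_le_compat_l; auto. destruct (Mx_ge M1 M2 M3) as [A1 [A2 A3]].
  apply X3dist_le. { lra. }
  intros th _. unfold seg, cst. destruct Hb as [_ Hb]. destruct (Hb (s + th)) as [B1 [B2 B3]].
  rewrite !Rminus_0_r, !Rabs_pos_eq by lra. lra.
Qed.

Lemma f_diff sigma M1 M2 M3 L (f : Ffun) Phi Psi s s' e :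
  0 <= e -> condC2 sigma M1 M2 M3 L f -> 0 <= L -> inBox M1 M2 M3 Phi -> inBox M1 M2 M3 Psi ->
  (forall th, -sigma <= th <= 0 -> Rabs (p1 Phi (s + th) - p1 Psi (s' + th)) <= e /\
      Rabs (p2 Phi (s + th) - p2 Psi (s' + th)) <= e /\ Rabs (p3 Phi (s + th) - p3 Psi (s' + th)) <= e) ->
  Rabs (f (seg (p1 Phi) s) (seg (p2 Phi) s) (seg (p3 Phi) s) - f (seg (p1 Psi) s') (seg (p2 Psi) s') (seg (p3 Psi) s'))
   <= L * e.
Proof.
  intros He HC HL H1 H2 Hd.
  eapply Rle_trans. apply HC; apply adm_seg; auto.
  apply Rmult_le_compat_l; auto. apply X3dist_le; auto.
Qed.

Lemma abs_between_lt (x a : R) : Rabs x < a -> -a < x < a.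
Proof. unfold Rabs. destruct (Rcase_abs x); lra. Qed.

Lemma Hop_bound sigma M1 M2 M3 L k1 k2 k3 (f : Ffun) beta r comp Phi t :
  0 <= M1 -> 0 <= M2 -> 0 <= M3 -> 0 <= L -> 0 <= beta ->
  condC1 k1 k2 k3 f -> condC2 sigma M1 M2 M3 L f -> inBox M1 M2 M3 Phi ->
  (forall x, Rabs (comp Phi x) <= Mx M1 M2 M3) ->
  Rabs (Hop f beta r comp Phi t) <= L * Mx M1 M2 M3 + beta * Mx M1 M2 M3.
Proof.
  intros HM1 HM2 HM3 HL Hb HC1 HC2 HB Hc. unfold Hop.
  eapply Rle_trans. apply Rabs_triang. apply Rplus_le_compat.
  - eapply f_bound; eauto.
  - rewrite Rabs_mult, Rabs_pos_eq by auto. apply Rmult_le_compat_l; auto.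
Qed.

Lemma Hop_cont sigma M1 M2 M3 L (f : Ffun) beta r comp Phi :
  0 <= sigma -> 0 <= L -> 0 <= beta ->
  condC2 sigma M1 M2 M3 L f -> inBox M1 M2 M3 Phi -> contR (comp Phi) ->
  contR (Hop f beta r comp Phi).
Proof.
  intros Hs HL Hb HC2 HB Hc t. apply cont_ed. intros eps He.
  set (eta := eps / (2 * (L + 1))).
  assert (Heta : 0 < eta) by (unfold eta; apply Rdiv_lt_0_compat; lra).
  destruct HB as [[C1 [C2 C3]] HBb].
  destruct (unif_cont _ (t + r - sigma - 1) (t + r + 1) eta C1 Heta) as [d1 [Hd1 U1]].
  destruct (unif_cont _ (t + r - sigma - 1) (t + r + 1) eta C2 Heta) as [d2 [Hd2 U2]].
  destruct (unif_cont _ (t + r - sigma - 1) (t + r + 1) eta C3 Heta) as [d3 [Hd3 U3]].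
  destruct (proj1 (cont_ed _ (t + r)) (Hc (t + r)) (eps / (2 * (beta + 1)))) as [d4 [Hd4 U4]].
  { apply Rdiv_lt_0_compat; lra. }
  exists (Rmin (Rmin 1 d1) (Rmin (Rmin d2 d3) d4)).
  split. { repeat apply Rmin_pos; lra. }
  intros y Hy.
  assert (Y1 : Rabs (y - t) < 1) by (eapply Rlt_le_trans; [exact Hy|]; eapply Rle_trans; apply Rmin_l).
  assert (Y2 : Rabs (y - t) < d1) by (eapply Rlt_le_trans; [exact Hy|]; eapply Rle_trans; [apply Rmin_l|apply Rmin_r]).
  assert (Y3 : Rabs (y - t) < d2) by (eapply Rlt_le_trans; [exact Hy|]; eapply Rle_trans; [apply Rmin_r|]; eapply Rle_trans; apply Rmin_l).
  assert (Y4 : Rabs (y - t) < d3) by (eapply Rlt_le_trans; [exact Hy|]; eapply Rle_trans; [apply Rmin_r|]; eapply Rle_trans; [apply Rmin_l| apply Rmin_r]).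
  assert (Y5 : Rabs (y - t) < d4) by (eapply Rlt_le_trans; [exact Hy|]; eapply Rle_trans; apply Rmin_r).
  assert (Hf : Rabs (f (seg (p1 Phi) (y + r)) (seg (p2 Phi) (y + r)) (seg (p3 Phi) (y + r)) -
                     f (seg (p1 Phi) (t + r)) (seg (p2 Phi) (t + r)) (seg (p3 Phi) (t + r))) <= L * eta).
  { apply f_diff with (M1 := M1) (M2 := M2) (M3 := M3) (sigma := sigma); auto; try lra.
    - split; auto. split; auto.
    - split; auto. split; auto.
    - assert (Y1' := abs_between_lt _ _ Y1).
      intros th Hth. 
      assert (R1 : t + r - sigma - 1 <= y + r + th <= t + r + 1) by lra.
      assert (R2 : t + r - sigma - 1 <= t + r + th <= t + r + 1) by lra.
      assert (E : y + r + th - (t + r + th) = y - t) by ring.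
      repeat split; apply Rlt_le; [apply U1 | apply U2 | apply U3]; auto; rewrite E; auto. }
  assert (Hcp := U4 (y + r) ltac:(replace (y + r - (t + r)) with (y - t) by ring; exact Y5)).
  unfold Hop.
  replace (f (seg (p1 Phi) (y + r)) (seg (p2 Phi) (y + r)) (seg (p3 Phi) (y + r)) + beta * comp Phi (y + r) -
     (f (seg (p1 Phi) (t + r)) (seg (p2 Phi) (t + r)) (seg (p3 Phi) (t + r)) + beta * comp Phi (t + r)))
   with ((f (seg (p1 Phi) (y + r)) (seg (p2 Phi) (y + r)) (seg (p3 Phi) (y + r)) -
          f (seg (p1 Phi) (t + r)) (seg (p2 Phi) (t + r)) (seg (p3 Phi) (t + r))) + beta * (comp Phi (y + r) - comp Phi (t + r))) by ring.
  eapply Rle_lt_trans. apply Rabs_triang.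
  rewrite Rabs_mult, (Rabs_pos_eq beta) by auto.
  assert (L * eta < eps / 2).
  { unfold eta. replace (L * (eps / (2 * (L + 1)))) with ((eps / 2) * (L / (L + 1))) by (field; lra).
    assert (L / (L + 1) < 1). { apply Rmult_lt_reg_r with (L + 1); [lra|]. field_simplify; lra. }
    nra. }
  assert (beta * Rabs (comp Phi (y + r) - comp Phi (t + r)) <= eps / 2).
  { assert (beta * (eps / (2 * (beta + 1))) <= eps / 2).
    { replace (beta * (eps / (2 * (beta + 1)))) with ((eps / 2) * (beta / (beta + 1))) by (field; lra).
      assert (beta / (beta + 1) <= 1). { apply Rmult_le_reg_r with (beta + 1); [lra|]. field_simplify; lra. }
      nra. }
    eapply Rle_trans; [| exact H0]. apply Rmult_le_compat_l; lra. }
  lra.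
Qed.


Lemma kernelG_kern D c r beta K d G : kernelG D c r beta K d G -> kern G K d.
Proof. intros [H1 [H2 [H3 _]]]. repeat split; auto. Qed.

Lemma bnd_abs (u : R -> R) : boundedR u -> exists B, 0 <= B /\ forall t, Rabs (u t) <= B.
Proof.
  intros [B HB]. exists B. split; auto. eapply Rle_trans; [apply Rabs_pos | apply (HB 0)].
Qed.

Lemma C2_conts (u : R -> R) : C2bnd u -> contR u /\ contR (Derive u) /\ contR (Derive (Derive u)).
Proof.
  intros [[H1 H2] [H3 _]]. split; [|split]; auto.
  - intros x. apply (@ex_derive_continuous R_AbsRing R_NormedModule). apply H1.
  - intros x. apply (@ex_derive_continuous R_AbsRing R_NormedModule). apply H2.
Qed.

Lemma cont_shift (u : R -> R) r : contR u -> contR (fun t => u (t + r)).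
Proof.
  intros Hu x. apply (cR_comp (fun t => t + r) u). apply cR_plus; [apply cR_id | apply cR_const]. apply Hu.
Qed.

Definition qfun (D c r beta : R) (u : R -> R) (t : R) :=
  - (D * Derive (Derive u) t - c * Derive u (t + r) - beta * u (t + r)).

Lemma qfun_props D c r beta u : C2bnd u ->
  contR (qfun D c r beta u) /\ boundedR (qfun D c r beta u) /\
  exists B, forall t, Rabs (qfun D c r beta u t) <= B.
Proof.
  intros HC. destruct (C2_conts u HC) as [C0 [C1 C2]].
  destruct HC as [_ [_ [B0 [B1 B2]]]].
  destruct (bnd_abs _ B0) as [b0 [_ Hb0]]. destruct (bnd_abs _ B1) as [b1 [_ Hb1]].
  destruct (bnd_abs _ B2) as [b2 [_ Hb2]].
  assert (Hb : forall t, Rabs (qfun D c r beta u t) <= Rabs D * b2 + Rabs c * b1 + Rabs beta * b0).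
  { intros t. unfold qfun. rewrite Rabs_Ropp.
    eapply Rle_trans. apply Rabs_triang. rewrite Rabs_Ropp, Rabs_mult.
    eapply Rle_trans. apply Rplus_le_compat_r. apply Rabs_triang. rewrite Rabs_Ropp, !Rabs_mult.
    apply Rplus_le_compat; [apply Rplus_le_compat|];
    apply Rmult_le_compat_l; auto; apply Rabs_pos. }
  split; [|split].
  - intros x. unfold qfun. apply cR_opp. apply cR_minus; [apply cR_minus|].
    + apply cR_mult; [apply cR_const | apply C2].
    + apply cR_mult; [apply cR_const | apply (cont_shift _ r C1)].
    + apply cR_mult; [apply cR_const | apply (cont_shift _ r C0)].
  - exists (Rabs D * b2 + Rabs c * b1 + Rabs beta * b0). exact Hb.
  - eexists. exact Hb.
Qed.

Lemma u_is_conv D c r beta K d G u : kernelG D c r beta K d G -> C2bnd u ->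
  forall t, u t = conv G (qfun D c r beta u) t.
Proof.
  intros Hk HC. destruct (qfun_props D c r beta u HC) as [Qc [Qb _]].
  destruct Hk as [_ [_ [_ Hk]]]. destruct (Hk _ Qc Qb) as [_ Hu].
  apply Hu.
  - destruct HC as [H _]. exact H.
  - destruct HC as [_ [_ [H _]]]. exact H.
  - intros t. unfold qfun. ring.
Qed.

Lemma lower_conv D c r beta K d G (u h w : R -> R) B : 0 < d ->
  kernelG D c r beta K d G -> C2bnd u -> contR h -> (forall t, Rabs (h t) <= B) ->
  (forall t, h t = w t + beta * u (t + r)) ->
  (forall t, D * Derive (Derive u) t - c * Derive u (t + r) + w t >= 0) ->
  forall t, u t <= conv G h t.
Proof.
  intros Hd Hk HC Hh HB Eh Hw t.
  rewrite (u_is_conv D c r beta K d G u Hk HC t).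
  destruct (qfun_props D c r beta u HC) as [Qc [_ [Bq HBq]]].
  apply (conv_mono G _ _ K d Bq B t Hd (kernelG_kern _ _ _ _ _ _ _ Hk) Qc Hh HBq HB).
  intros s. rewrite Eh. unfold qfun. specialize (Hw s). lra.
Qed.

Lemma upper_conv D c r beta K d G (u h w : R -> R) B : 0 < d ->
  kernelG D c r beta K d G -> C2bnd u -> contR h -> (forall t, Rabs (h t) <= B) ->
  (forall t, h t = w t + beta * u (t + r)) ->
  (forall t, D * Derive (Derive u) t - c * Derive u (t + r) + w t <= 0) ->
  forall t, conv G h t <= u t.
Proof.
  intros Hd Hk HC Hh HB Eh Hw t.
  rewrite (u_is_conv D c r beta K d G u Hk HC t).
  destruct (qfun_props D c r beta u HC) as [Qc [_ [Bq HBq]]].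
  apply (conv_mono G _ _ K d B Bq t Hd (kernelG_kern _ _ _ _ _ _ _ Hk) Hh Qc HB HBq).
  intros s. rewrite Eh. unfold qfun. specialize (Hw s). lra.
Qed.

Lemma conv_cont D c r beta K d G h : kernelG D c r beta K d G -> contR h -> boundedR h ->
  contR (conv G h).
Proof.
  intros [_ [_ [_ Hk]]] Hc Hb x. destruct (Hk h Hc Hb) as [[[Hd _] _] _].
  apply (@ex_derive_continuous R_AbsRing R_NormedModule). apply Hd.
Qed.

Lemma seg0 (u : R -> R) s : seg u s 0 = u s.
Proof. unfold seg. now rewrite Rplus_0_r. Qed.

Lemma inBox_mix M1 M2 M3 A B C : inBox M1 M2 M3 A -> inBox M1 M2 M3 B -> inBox M1 M2 M3 C ->
  inBox M1 M2 M3 (mk3 (p1 A) (p2 B) (p3 C)).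
Proof.
  intros [[A1 _] HA] [[_ [B2 _]] HB] [[_ [_ C3]] HC]. split. split; [|split]; auto.
  intros t. simpl. destruct (HA t) as [? _]. destruct (HB t) as [_ [? _]]. destruct (HC t) as [_ [_ ?]].
  auto.
Qed.

Lemma leX_seg sigma (u v : R -> R) s : (forall t, u t <= v t) -> leX sigma (seg u s) (seg v s).
Proof. intros H th _. unfold seg. apply H. Qed.

Section PQ.
Variables (sigma M1 M2 M3 beta1 beta2 beta3 : R) (f1 f2 f3 : Ffun).
Hypothesis HP : condPQM sigma M1 M2 M3 beta1 beta2 beta3 f1 f2 f3.

Lemma PQ1 r A B t : inBox M1 M2 M3 A -> inBox M1 M2 M3 B -> le3 B A ->
  Hop f1 beta1 r p1 B t <= Hop f1 beta1 r p1 A t.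
Proof.
  intros HA HB Hle. unfold Hop.
  destruct (HP _ _ _ _ _ _ (adm_seg sigma _ _ _ _ (t + r) HA) (adm_seg sigma _ _ _ _ (t + r) HB)
    (leX_seg _ _ _ _ (fun x => proj1 (Hle x))) (leX_seg _ _ _ _ (fun x => proj1 (proj2 (Hle x))))
    (leX_seg _ _ _ _ (fun x => proj2 (proj2 (Hle x))))) as [H _].
  rewrite !seg0 in H. lra.
Qed.

Lemma PQ3 r A B t : inBox M1 M2 M3 A -> inBox M1 M2 M3 B -> le3 B A ->
  Hop f3 beta3 r p3 B t <= Hop f3 beta3 r p3 A t.
Proof.
  intros HA HB Hle. unfold Hop.
  destruct (HP _ _ _ _ _ _ (adm_seg sigma _ _ _ _ (t + r) HA) (adm_seg sigma _ _ _ _ (t + r) HB)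
    (leX_seg _ _ _ _ (fun x => proj1 (Hle x))) (leX_seg _ _ _ _ (fun x => proj1 (proj2 (Hle x))))
    (leX_seg _ _ _ _ (fun x => proj2 (proj2 (Hle x))))) as [_ [_ [_ [_ H]]]].
  rewrite !seg0 in H. lra.
Qed.

Lemma PQ2lo r Lo Up Phi t : inBox M1 M2 M3 Lo -> inBox M1 M2 M3 Up -> inBox M1 M2 M3 Phi ->
  le3 Lo Phi -> le3 Phi Up ->
  Hop f2 beta2 r p2 (mk3 (p1 Up) (p2 Lo) (p3 Up)) t <= Hop f2 beta2 r p2 Phi t.
Proof.
  intros HL HU HF H1 H2. unfold Hop. simpl. set (s := t + r).
  assert (B1 := inBox_mix _ _ _ _ _ _ HU HL HU).
  assert (B2 := inBox_mix _ _ _ _ _ _ HF HL HU).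
  assert (B3 := inBox_mix _ _ _ _ _ _ HF HL HF).
  (* step 1: P3 with a = (Up1,Lo2,Up3), b = (Phi1,Lo2,Up3) *)
  destruct (HP _ _ _ _ _ _ (adm_seg sigma _ _ _ _ s B1) (adm_seg sigma _ _ _ _ s B2)
    (leX_seg _ _ _ _ (fun x => proj1 (H2 x))) (leX_seg _ _ _ _ (fun x => Rle_refl _))
    (leX_seg _ _ _ _ (fun x => Rle_refl _))) as [_ [_ [S1 _]]].
  (* step 2: P4 with a = (Phi1,Lo2,Up3), b = (Phi1,Lo2,Phi3) *)
  destruct (HP _ _ _ _ _ _ (adm_seg sigma _ _ _ _ s B2) (adm_seg sigma _ _ _ _ s B3)
    (leX_seg _ _ _ _ (fun x => Rle_refl _)) (leX_seg _ _ _ _ (fun x => Rle_refl _))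
    (leX_seg _ _ _ _ (fun x => proj2 (proj2 (H2 x))))) as [_ [_ [_ [S2 _]]]].
  (* step 3: P2 with a = Phi, b = (Phi1, Lo2, Phi3) *)
  destruct (HP _ _ _ _ _ _ (adm_seg sigma _ _ _ _ s HF) (adm_seg sigma _ _ _ _ s B3)
    (leX_seg _ _ _ _ (fun x => Rle_refl _)) (leX_seg _ _ _ _ (fun x => proj1 (proj2 (H1 x))))
    (leX_seg _ _ _ _ (fun x => Rle_refl _))) as [_ [S3 _]].
  simpl in *. rewrite !seg0 in S3. lra.
Qed.

Lemma PQ2hi r Lo Up Phi t : inBox M1 M2 M3 Lo -> inBox M1 M2 M3 Up -> inBox M1 M2 M3 Phi ->
  le3 Lo Phi -> le3 Phi Up ->
  Hop f2 beta2 r p2 Phi t <= Hop f2 beta2 r p2 (mk3 (p1 Lo) (p2 Up) (p3 Lo)) t.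
Proof.
  intros HL HU HF H1 H2. unfold Hop. simpl. set (s := t + r).
  assert (B1 := inBox_mix _ _ _ _ _ _ HF HU HF).
  assert (B2 := inBox_mix _ _ _ _ _ _ HF HU HL).
  assert (B3 := inBox_mix _ _ _ _ _ _ HL HU HL).
  (* P2: a = (Phi1,Up2,Phi3), b2 = Phi2 *)
  destruct (HP _ _ _ _ _ _ (adm_seg sigma _ _ _ _ s B1) (adm_seg sigma _ _ _ _ s HF)
    (leX_seg _ _ _ _ (fun x => Rle_refl _)) (leX_seg _ _ _ _ (fun x => proj1 (proj2 (H2 x))))
    (leX_seg _ _ _ _ (fun x => Rle_refl _))) as [_ [S1 _]].
  (* P4: a = (Phi1,Up2,Phi3), b = (Phi1,Up2,Lo3) *)
  destruct (HP _ _ _ _ _ _ (adm_seg sigma _ _ _ _ s B1) (adm_seg sigma _ _ _ _ s B2)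
    (leX_seg _ _ _ _ (fun x => Rle_refl _)) (leX_seg _ _ _ _ (fun x => Rle_refl _))
    (leX_seg _ _ _ _ (fun x => proj2 (proj2 (H1 x))))) as [_ [_ [_ [S2 _]]]].
  (* P3: a = (Phi1,Up2,Lo3), b = (Lo1,Up2,Lo3) *)
  destruct (HP _ _ _ _ _ _ (adm_seg sigma _ _ _ _ s B2) (adm_seg sigma _ _ _ _ s B3)
    (leX_seg _ _ _ _ (fun x => proj1 (H1 x))) (leX_seg _ _ _ _ (fun x => Rle_refl _))
    (leX_seg _ _ _ _ (fun x => Rle_refl _))) as [_ [_ [S3 _]]].
  simpl in *. rewrite !seg0 in S1. lra.
Qed.
End PQ.

Lemma vnorm_ge a b c : Rabs a <= vnorm a b c /\ Rabs b <= vnorm a b c /\ Rabs c <= vnorm a b c.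
Proof.
  unfold vnorm. repeat split. apply Rmax_l.
  eapply Rle_trans; [apply Rmax_l | apply Rmax_r]. eapply Rle_trans; [apply Rmax_r | apply Rmax_r].
Qed.

Lemma vnorm_le a b c e : Rabs a <= e -> Rabs b <= e -> Rabs c <= e -> vnorm a b c <= e.
Proof. intros. unfold vnorm. repeat apply Rmax_lub; auto. Qed.

Lemma mu_norm_le mu A e : (forall t, exp (- mu * Rabs t) * vnorm (p1 A t) (p2 A t) (p3 A t) <= e) ->
  is_finite (mu_norm mu A) /\ mu_norm mu A <= e.
Proof.
  intros H. unfold mu_norm.
  destruct (Lub_Rbar_correct (fun x => exists t, x = exp (- mu * Rabs t) * vnorm (p1 A t) (p2 A t) (p3 A t))) as [Hub Hlub].
  assert (Hb : Rbar_le (Lub_Rbar (fun x => exists t, x = exp (- mu * Rabs t) * vnorm (p1 A t) (p2 A t) (p3 A t))) e).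
  { apply Hlub. intros x [t ->]. simpl. apply H. }
  assert (Hl : Rbar_le (exp (- mu * Rabs 0) * vnorm (p1 A 0) (p2 A 0) (p3 A 0))
     (Lub_Rbar (fun x => exists t, x = exp (- mu * Rabs t) * vnorm (p1 A t) (p2 A t) (p3 A t)))).
  { apply Hub. exists 0. reflexivity. }
  destruct (Lub_Rbar _); simpl in *; try easy.
Qed.

Lemma mu_norm_lt mu A e eps : (forall t, exp (- mu * Rabs t) * vnorm (p1 A t) (p2 A t) (p3 A t) <= e) ->
  e < eps -> Rbar_lt (mu_norm mu A) (Finite eps).
Proof.
  intros H He. destruct (mu_norm_le mu A e H) as [Hf Hle].
  rewrite <- Hf in *. simpl in *. lra.
Qed.

Lemma mu_norm_ptw mu A del : Rbar_lt (mu_norm mu A) (Finite del) ->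
  forall t, exp (- mu * Rabs t) * vnorm (p1 A t) (p2 A t) (p3 A t) <= del.
Proof.
  intros H t. unfold mu_norm in H.
  destruct (Lub_Rbar_correct (fun x => exists t, x = exp (- mu * Rabs t) * vnorm (p1 A t) (p2 A t) (p3 A t))) as [Hub _].
  assert (Hl := Hub _ (ex_intro _ t eq_refl)).
  destruct (Lub_Rbar _); simpl in *; try easy. lra.
Qed.

Lemma mu_ptw_comp mu A del : Rbar_lt (mu_norm mu A) (Finite del) ->
  forall t, Rabs (p1 A t) <= del * exp (mu * Rabs t) /\ Rabs (p2 A t) <= del * exp (mu * Rabs t) /\
            Rabs (p3 A t) <= del * exp (mu * Rabs t).
Proof.
  intros H t. assert (K := mu_norm_ptw mu A del H t).
  destruct (vnorm_ge (p1 A t) (p2 A t) (p3 A t)) as [V1 [V2 V3]].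
  assert (E : exp (- mu * Rabs t) * exp (mu * Rabs t) = 1).
  { rewrite <- exp_plus. replace (- mu * Rabs t + mu * Rabs t) with 0 by ring. apply exp_0. }
  assert (P := exp_pos (mu * Rabs t)). assert (P' := exp_pos (- mu * Rabs t)).
  assert (Hv : vnorm (p1 A t) (p2 A t) (p3 A t) <= del * exp (mu * Rabs t)).
  { replace (vnorm (p1 A t) (p2 A t) (p3 A t)) with
      ((exp (- mu * Rabs t) * vnorm (p1 A t) (p2 A t) (p3 A t)) * exp (mu * Rabs t)).
    2:{ rewrite Rmult_comm, <- Rmult_assoc, (Rmult_comm (exp _)), E. ring. }
    apply Rmult_le_compat_r; lra. }
  repeat split; lra.
Qed.

Definition incr (th : nat -> nat) := forall n, (th n < th (S n))%nat.
Definition cvg (x : nat -> R) := exists l, forall eps, 0 < eps -> exists N, forall n, (N <= n)%nat -> Rabs (x n - l) <= eps.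

Lemma incr_lt th : incr th -> forall m n, (m < n)%nat -> (th m < th n)%nat.
Proof.
  intros H m n Hmn. induction Hmn. apply H. specialize (H m0). lia.
Qed.

Lemma incr_ge th : incr th -> forall n, (n <= th n)%nat.
Proof. intros H n. induction n. lia. specialize (H n). lia. Qed.

Lemma archi_inv eps : 0 < eps -> exists N : nat, / (INR N + 1) < eps.
Proof.
  intros He. destruct (archimed (/ eps)) as [H1 _].
  assert (0 <= IZR (up (/ eps))). { apply Rlt_le, Rlt_trans with (/ eps); auto. apply Rinv_0_lt_compat; auto. }
  exists (Z.to_nat (up (/ eps))).
  rewrite INR_IZR_INZ, Z2Nat.id. 2:{ apply le_IZR. auto. }
  assert (0 < / eps) by (apply Rinv_0_lt_compat; auto).
  replace eps with (/ (/ eps)) at 2 by (field; lra).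
  apply Rinv_lt_contravar. apply Rmult_lt_0_compat; lra. lra.
Qed.

Lemma bw_sub (x : nat -> R) B : (forall n, Rabs (x n) <= B) ->
  exists th, incr th /\ cvg (fun n => x (th n)).
Proof.
  intros HB.
  destruct (Bolzano_Weierstrass x (fun y => -B <= y <= B) (compact_P3 (-B) B)) as [l Hl].
  { intros n. specialize (HB n). unfold Rabs in HB. destruct (Rcase_abs (x n)); lra. }
  assert (Hp : forall N k : nat, exists p, (N <= p)%nat /\ Rabs (x p - l) < / (INR k + 1)).
  { intros N k. assert (Hk : 0 < / (INR k + 1)) by (apply Rinv_0_lt_compat; generalize (pos_INR k); lra).
    destruct (Hl (fun y => Rabs (y - l) < / (INR k + 1)) N) as [p [Hp1 Hp2]].
    { exists (mkposreal _ Hk). intros y Hy. exact Hy. }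
    exists p. auto. }
  set (pick := fun N k => proj1_sig (constructive_indefinite_description _ (Hp N k))).
  assert (Hpick : forall N k, (N <= pick N k)%nat /\ Rabs (x (pick N k) - l) < / (INR k + 1)).
  { intros N k. unfold pick. destruct (constructive_indefinite_description _ _). simpl. auto. }
  set (th := fix th (n : nat) : nat := match n with O => pick O O | S m => pick (S (th m)) (S m) end).
  exists th. split.
  - intros n. simpl. destruct (Hpick (S (th n)) (S n)) as [H _]. lia.
  - exists l. intros eps He. destruct (archi_inv eps He) as [N HN]. exists N. intros n Hn.
    assert (Hb : Rabs (x (th n) - l) < / (INR n + 1)).
    { destruct n; simpl; apply Hpick. }
    apply Rlt_le. eapply Rlt_trans. exact Hb. eapply Rle_lt_trans; [| exact HN].
    apply Rinv_le_contravar. generalize (pos_INR N); lra. apply le_INR in Hn. lra.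
Qed.

Lemma diag (a : nat -> nat -> R) B : (forall j n, Rabs (a j n) <= B) ->
  exists phi, incr phi /\ forall j, cvg (fun n => a j (phi n)).
Proof.
  intros HB.
  assert (HE : forall x : nat -> R, exists th, incr th /\ ((forall n, Rabs (x n) <= B) -> cvg (fun n => x (th n)))).
  { intros x. destruct (classic (forall n, Rabs (x n) <= B)) as [H|H].
    - destruct (bw_sub x B H) as [th [H1 H2]]. exists th. auto.
    - exists (fun n => n). split. intros n; lia. intros H'. contradiction. }
  set (E := fun x => proj1_sig (constructive_indefinite_description _ (HE x))).
  assert (HEs : forall x, incr (E x) /\ ((forall n, Rabs (x n) <= B) -> cvg (fun n => x (E x n)))).
  { intros x. unfold E. destruct (constructive_indefinite_description _ _). simpl. auto. }
  set (Psi := fix Psi (k : nat) : nat -> nat := match k with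
     | O => E (a O) | S k' => fun n => Psi k' (E (fun m => a (S k') (Psi k' m)) n) end).
  assert (P1 : forall k, incr (Psi k)).
  { induction k; simpl. apply HEs. intros n. apply incr_lt; auto. apply HEs. }
  assert (P2 : forall k, cvg (fun n => a k (Psi k n))).
  { destruct k; simpl. apply HEs. intros; apply HB.
    apply (proj2 (HEs (fun m => a (S k) (Psi k m)))). intros; apply HB. }
  assert (P3 : forall i j, exists tau, (forall m, (m <= tau m)%nat) /\ forall m, Psi (j + i)%nat m = Psi j (tau m)).
  { induction i; intros j.
    - exists (fun m => m). split; intros; auto. rewrite Nat.add_0_r. auto.
    - destruct (IHi j) as [tau [Ht1 Ht2]].
      exists (fun m => tau (E (fun m0 => a (S (j + i)) (Psi (j + i)%nat m0)) m)). split.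
      + intros m. eapply Nat.le_trans; [| apply Ht1]. apply incr_ge, HEs.
      + intros m. rewrite Nat.add_succ_r. simpl. apply Ht2. }
  exists (fun n => Psi n n). split.
  - intros n. simpl. apply incr_lt; auto. eapply Nat.lt_le_trans; [| apply incr_ge, HEs]. lia.
  - intros j. destruct (P2 j) as [l Hl]. exists l. intros eps He.
    destruct (Hl eps He) as [N HN]. exists (Nat.max N j). intros n Hn.
    destruct (P3 (n - j)%nat j) as [tau [Ht1 Ht2]].
    replace (Psi n n) with (Psi (j + (n - j))%nat n) by (f_equal; lia).
    rewrite Ht2. apply HN. specialize (Ht1 n). lia.
Qed.

Definition pt (j : nat) : R :=
  let (p, m) := Cantor.of_nat j in let (x, y) := Cantor.of_nat p in (INR x - INR y) / (INR m + 1).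

Lemma pt_idx x y m : pt (Cantor.to_nat (Cantor.to_nat (x, y), m)) = (INR x - INR y) / (INR m + 1).
Proof. unfold pt. rewrite !Cantor.cancel_of_to. reflexivity. Qed.

Definition equi (u : nat -> R -> R) := forall eps, 0 < eps -> exists d, 0 < d /\
  forall n t t', Rabs (t - t') < d -> Rabs (u n t - u n t') <= eps.

Lemma div_bound a q : 0 < q -> 0 <= a < 1 -> Rabs (a / q) < / q.
Proof.
  intros Hq Ha. rewrite Rabs_pos_eq.
  - unfold Rdiv. rewrite <- (Rmult_1_l (/ q)) at 2. apply Rmult_lt_compat_r. apply Rinv_0_lt_compat; auto. lra.
  - apply Rmult_le_pos; [lra | left; apply Rinv_0_lt_compat; auto].
Qed.

Lemma near_grid (t : R) (m : nat) : exists x y : nat, (x = 0 \/ y = 0)%nat /\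
  Rabs (t - (INR x - INR y) / (INR m + 1)) < / (INR m + 1) /\
  INR x + INR y <= Rabs t * (INR m + 1).
Proof.
  assert (Hm : 0 < INR m + 1) by (generalize (pos_INR m); lra).
  destruct (Rle_dec 0 t) as [Ht|Ht].
  - destruct (nfloor_ex (t * (INR m + 1))) as [x [Hx1 Hx2]]. { nra. }
    exists x, 0%nat. split; auto. simpl INR. rewrite (Rabs_pos_eq t) by lra. split.
    + replace (t - (INR x - 0) / (INR m + 1)) with ((t * (INR m + 1) - INR x) / (INR m + 1)) by (field; lra).
      apply div_bound; lra.
    + lra.
  - destruct (nfloor_ex (- t * (INR m + 1))) as [y [Hy1 Hy2]]. { nra. }
    exists 0%nat, y. split; auto. simpl INR. rewrite (Rabs_left t) by lra. split.
    + replace (t - (0 - INR y) / (INR m + 1)) with (- ((- t * (INR m + 1) - INR y) / (INR m + 1))) by (field; lra).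
      rewrite Rabs_Ropp. apply div_bound; lra.
    + lra.
Qed.

Lemma AA (u : nat -> R -> R) B : (forall n t, Rabs (u n t) <= B) -> equi u ->
  exists phi, incr phi /\ exists v : R -> R, forall T eps, 0 < eps -> exists N, forall n, (N <= n)%nat ->
    forall t, Rabs t <= T -> Rabs (u (phi n) t - v t) <= eps.
Proof.
  intros HB Heq.
  destruct (diag (fun j n => u n (pt j)) B (fun j n => HB n (pt j))) as [phi [Hphi Hc]].
  exists phi. split; auto.
  set (w := fun n => u (phi n)).
  assert (UC : forall T eps, 0 < eps -> exists N, forall n n', (N <= n)%nat -> (N <= n')%nat ->
      forall t, Rabs t <= T -> Rabs (w n t - w n' t) <= eps).
  { intros T eps He.
    destruct (Heq (eps / 3)) as [d [Hd Hud]]. { lra. }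
    destruct (archi_inv d Hd) as [m Hm].
    assert (Hcp : forall j, exists N, forall n n', (N <= n)%nat -> (N <= n')%nat ->
                Rabs (w n (pt j) - w n' (pt j)) <= eps / 3).
    { intros j. destruct (Hc j) as [l Hl]. destruct (Hl (eps / 6)) as [N HN]. { lra. }
      exists N. intros n n' Hn Hn'. assert (K1 := HN n Hn). assert (K2 := HN n' Hn').
      simpl in K1, K2. unfold w.
      replace (u (phi n) (pt j) - u (phi n') (pt j)) with ((u (phi n) (pt j) - l) - (u (phi n') (pt j) - l)) by ring.
      eapply Rle_trans. apply Rabs_triang. rewrite Rabs_Ropp. lra. }
    set (q := fun x y => pt (Cantor.to_nat (Cantor.to_nat (x, y), m))).
    assert (Fin : forall K, exists N, forall x, (x <= K)%nat -> forall n n', (N <= n)%nat -> (N <= n')%nat ->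
       Rabs (w n (q x 0%nat) - w n' (q x 0%nat)) <= eps / 3 /\ Rabs (w n (q 0%nat x) - w n' (q 0%nat x)) <= eps / 3).
    { induction K.
      - destruct (Hcp (Cantor.to_nat (Cantor.to_nat (0%nat, 0%nat), m))) as [N HN].
        exists N. intros x Hx n n' Hn Hn'. assert (x = 0%nat) by lia. subst x. unfold q. split; apply HN; auto.
      - destruct IHK as [N0 HN0].
        destruct (Hcp (Cantor.to_nat (Cantor.to_nat (S K, 0%nat), m))) as [N1 HN1].
        destruct (Hcp (Cantor.to_nat (Cantor.to_nat (0%nat, S K), m))) as [N2 HN2].
        exists (Nat.max N0 (Nat.max N1 N2)). intros x Hx n n' Hn Hn'.
        destruct (Nat.le_gt_cases x K) as [Hx'|Hx'].
        + apply HN0; auto; lia.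
        + assert (x = S K) by lia. subst x. unfold q. split; [apply HN1 | apply HN2]; lia. }
    assert (Hm1 : 0 < INR m + 1) by (generalize (pos_INR m); lra).
    destruct (nfloor_ex (Rmax 0 T * (INR m + 1))) as [K [HK1 HK2]].
    { apply Rmult_le_pos; [apply Rmax_l | lra]. }
    destruct (Fin K) as [N HN]. exists N. intros n n' Hn Hn' t Ht.
    destruct (near_grid t m) as [x [y [Hxy [Hd1 Hd2]]]].
    assert (Hx : (x <= K)%nat /\ (y <= K)%nat).
    { assert (INR x + INR y < INR (S K)).
      { rewrite S_INR. eapply Rle_lt_trans. exact Hd2. eapply Rle_lt_trans; [| exact HK2].
        apply Rmult_le_compat_r; [lra|]. eapply Rle_trans; [exact Ht | apply Rmax_r]. }
      generalize (pos_INR x) (pos_INR y). intros. assert (x < S K)%nat by (apply INR_lt; lra). assert (y < S K)%nat by (apply INR_lt; lra). lia. }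
    assert (Hp : Rabs (w n (q x y) - w n' (q x y)) <= eps / 3).
    { destruct Hxy as [->| ->].
      - apply (HN y); auto; lia.
      - apply (HN x); auto; lia. }
    assert (Hdist : Rabs (t - q x y) < d).
    { unfold q. rewrite pt_idx. lra. }
    assert (A1 := Hud (phi n) t (q x y) Hdist). assert (A2 := Hud (phi n') t (q x y) Hdist).
    unfold w in *.
    replace (u (phi n) t - u (phi n') t) with
      ((u (phi n) t - u (phi n) (q x y)) + (u (phi n) (q x y) - u (phi n') (q x y)) - (u (phi n') t - u (phi n') (q x y))) by ring.
    eapply Rle_trans. apply Rabs_triang. rewrite Rabs_Ropp.
    eapply Rle_trans. apply Rplus_le_compat_r. apply Rabs_triang. lra. }
  assert (Hlim : forall t, exists l : R, is_lim_seq (fun n => w n t) l).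
  { intros t. apply (proj2 (ex_lim_seq_cauchy_corr _)). intros eps.
    destruct (UC (Rabs t) (eps / 2)) as [N HN]. { generalize (cond_pos eps). lra. }
    exists N. intros n n' Hn Hn'. eapply Rle_lt_trans. apply HN; auto. apply Rle_refl.
    generalize (cond_pos eps). lra. }
  set (v := fun t => proj1_sig (constructive_indefinite_description _ (Hlim t))).
  assert (Hv : forall t, is_lim_seq (fun n => w n t) (v t)).
  { intros t. unfold v. destruct (constructive_indefinite_description _ _). auto. }
  exists v. intros T eps He. destruct (UC T (eps / 2)) as [N HN]. { lra. }
  exists N. intros n Hn t Ht.
  destruct (proj1 (is_lim_seq_Reals _ _) (Hv t) (eps / 2)) as [N2 HN2]. { lra. }
  specialize (HN2 (Nat.max N N2) ltac:(lia)). unfold Rdist in HN2.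
  specialize (HN n (Nat.max N N2) Hn ltac:(lia) t Ht).
  fold (w n). replace (w n t - v t) with ((w n t - w (Nat.max N N2) t) + (w (Nat.max N N2) t - v t)) by ring.
  eapply Rle_trans. apply Rabs_triang. lra.
Qed.

Lemma exp_le_aux (x y : R) : x <= y -> exp x <= exp y.
Proof. intros [H|H]. apply Rlt_le, exp_increasing, H. subst; lra. Qed.

Definition UCC (u : nat -> R -> R) (v : R -> R) := forall T eps, 0 < eps -> exists N, forall n, (N <= n)%nat ->
    forall t, Rabs t <= T -> Rabs (u n t - v t) <= eps.

Lemma UCC_sub u v psi : UCC u v -> incr psi -> UCC (fun n => u (psi n)) v.
Proof.
  intros H Hp T eps He. destruct (H T eps He) as [N HN]. exists N. intros n Hn t Ht.
  apply HN; auto. eapply Nat.le_trans; [exact Hn | apply incr_ge; auto].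
Qed.

Lemma equi_sub u psi : equi u -> equi (fun n => u (psi n)).
Proof. intros H eps He. destruct (H eps He) as [d [Hd Hu]]. exists d. split; auto. Qed.

Lemma incr_comp f g : incr f -> incr g -> incr (fun n => f (g n)).
Proof. intros Hf Hg n. apply incr_lt; auto. Qed.

Lemma lim_bound u v B : (forall n t, Rabs (u n t) <= B) -> UCC u v -> forall t, Rabs (v t) <= B.
Proof.
  intros HB H t. apply Rnot_lt_le. intros Hlt.
  destruct (H (Rabs t) ((Rabs (v t) - B) / 2)) as [N HN]. { lra. }
  specialize (HN N (Nat.le_refl _) t (Rle_refl _)). specialize (HB N t).
  assert (Rabs (v t) <= Rabs (u N t) + Rabs (u N t - v t)).
  { replace (v t) with (u N t - (u N t - v t)) at 1 by ring. eapply Rle_trans. apply Rabs_triang. rewrite Rabs_Ropp. lra. }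
  lra.
Qed.

Lemma lim_cont u v : equi u -> UCC u v -> contR v.
Proof.
  intros He H t. apply cont_ed. intros eps Heps.
  destruct (He (eps / 3)) as [d [Hd Hu]]. { lra. }
  exists (Rmin d 1). split. { apply Rmin_pos; lra. }
  intros y Hy.
  destruct (H (Rabs t + 1) (eps / 4)) as [N HN]. { lra. }
  assert (Hyt : Rabs y <= Rabs t + 1).
  { replace y with (t + (y - t)) by ring. eapply Rle_trans. apply Rabs_triang.
    assert (Rabs (y - t) < 1) by (eapply Rlt_le_trans; [exact Hy | apply Rmin_r]). lra. }
  assert (A1 := HN N (Nat.le_refl _) y Hyt). assert (A2 := HN N (Nat.le_refl _) t ltac:(lra)).
  assert (A3 := Hu N y t ltac:(eapply Rlt_le_trans; [exact Hy | apply Rmin_l])).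
  replace (v y - v t) with (- (u N y - v y) + (u N y - u N t) + (u N t - v t)) by ring.
  eapply Rle_lt_trans. apply Rabs_triang. eapply Rle_lt_trans. apply Rplus_le_compat_r. apply Rabs_triang.
  rewrite Rabs_Ropp. lra.
Qed.

Lemma weighted u v B mu : 0 <= B -> 0 < mu -> (forall n t, Rabs (u n t) <= B) -> (forall t, Rabs (v t) <= B) ->
  UCC u v -> forall eps, 0 < eps -> exists N, forall n, (N <= n)%nat -> forall t,
    exp (- mu * Rabs t) * Rabs (u n t - v t) <= eps.
Proof.
  intros HB Hmu Hu Hv H eps He.
  set (T := ln ((2 * B + eps) / eps) / mu).
  assert (Hq : 0 < (2 * B + eps) / eps) by (apply Rdiv_lt_0_compat; lra).
  assert (HT : exp (- mu * T) * (2 * B) <= eps).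
  { unfold T. replace (- mu * (ln ((2 * B + eps) / eps) / mu)) with (- ln ((2 * B + eps) / eps)) by (field; lra).
    rewrite exp_Ropp, exp_ln by auto.
    replace (/ ((2 * B + eps) / eps) * (2 * B)) with (eps * (2 * B / (2 * B + eps))) by (field; lra).
    assert (2 * B / (2 * B + eps) <= 1). { apply Rmult_le_reg_r with (2 * B + eps); [lra|]. field_simplify; lra. }
    nra. }
  destruct (H T eps He) as [N HN]. exists N. intros n Hn t.
  assert (P := exp_pos (- mu * Rabs t)).
  destruct (Rle_dec (Rabs t) T) as [Ht|Ht].
  - assert (exp (- mu * Rabs t) <= 1). { rewrite <- exp_0. apply exp_le_aux. generalize (Rabs_pos t). nra. }
    specialize (HN n Hn t Ht). generalize (Rabs_pos (u n t - v t)). nra.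
  - assert (exp (- mu * Rabs t) <= exp (- mu * T)) by (apply exp_le_aux; nra).
    assert (Rabs (u n t - v t) <= 2 * B).
    { eapply Rle_trans. apply Rabs_triang. rewrite Rabs_Ropp. generalize (Hu n t) (Hv t). lra. }
    generalize (Rabs_pos (u n t - v t)). nra.
Qed.

Lemma vnorm_cases a b c : vnorm a b c = Rabs a \/ vnorm a b c = Rabs b \/ vnorm a b c = Rabs c.
Proof. unfold vnorm, Rmax. destruct (Rle_dec (Rabs b) (Rabs c)); destruct (Rle_dec (Rabs a) _); auto. Qed.

Lemma vnorm_scaled k a b c e : k * Rabs a <= e -> k * Rabs b <= e -> k * Rabs c <= e -> k * vnorm a b c <= e.
Proof. intros. destruct (vnorm_cases a b c) as [->|[->| ->]]; auto. Qed.

Lemma conv_sub (G h1 h2 : R -> R) K d B1 B2 t : 0 < d -> kern G K d -> contR h1 -> contR h2 ->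
  (forall s, Rabs (h1 s) <= B1) -> (forall s, Rabs (h2 s) <= B2) ->
  conv G (fun s => h1 s - h2 s) t = conv G h1 t - conv G h2 t.
Proof.
  intros. unfold conv at 1. apply is_int_unique. eapply conv_minus; eauto.
Qed.

Lemma compF_lip sigma M1 M2 M3 L k1 k2 k3 (f : Ffun) beta r comp D c K d G mu Phi Psi del :
  0 <= sigma -> 0 <= M1 -> 0 <= M2 -> 0 <= M3 -> 0 < L -> 0 < beta -> 0 < mu -> mu < d -> 0 <= del ->
  kernelG D c r beta K d G -> condC1 k1 k2 k3 f -> condC2 sigma M1 M2 M3 L f ->
  inBox M1 M2 M3 Phi -> inBox M1 M2 M3 Psi -> contR (comp Phi) -> contR (comp Psi) ->
  (forall x, Rabs (comp Phi x) <= Mx M1 M2 M3) -> (forall x, Rabs (comp Psi x) <= Mx M1 M2 M3) ->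
  (forall x, Rabs (p1 Psi x - p1 Phi x) <= del * exp (mu * Rabs x) /\
             Rabs (p2 Psi x - p2 Phi x) <= del * exp (mu * Rabs x) /\
             Rabs (p3 Psi x - p3 Phi x) <= del * exp (mu * Rabs x)) ->
  (forall x, Rabs (comp Psi x - comp Phi x) <= del * exp (mu * Rabs x)) ->
  forall t, Rabs (Fop G f beta r comp Psi t - Fop G f beta r comp Phi t) <=
     ((L + beta) * exp (mu * (Rabs r + sigma)) * K * (2 / (d - mu))) * del * exp (mu * Rabs t).
Proof.
  intros Hs HM1 HM2 HM3 HL Hb Hmu Hmd Hdel Hk HC1 HC2 BPhi BPsi CPhi CPsi BcPhi BcPsi Hdp Hdc t.
  assert (Hk' := kernelG_kern _ _ _ _ _ _ _ Hk).
  assert (H1c := Hop_cont sigma M1 M2 M3 L f beta r comp Psi Hs ltac:(lra) ltac:(lra) HC2 BPsi CPsi).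
  assert (H2c := Hop_cont sigma M1 M2 M3 L f beta r comp Phi Hs ltac:(lra) ltac:(lra) HC2 BPhi CPhi).
  assert (H1b := fun t => Hop_bound sigma M1 M2 M3 L k1 k2 k3 f beta r comp Psi t HM1 HM2 HM3 ltac:(lra) ltac:(lra) HC1 HC2 BPsi BcPsi).
  assert (H2b := fun t => Hop_bound sigma M1 M2 M3 L k1 k2 k3 f beta r comp Phi t HM1 HM2 HM3 ltac:(lra) ltac:(lra) HC1 HC2 BPhi BcPhi).
  unfold Fop. rewrite <- (conv_sub G _ _ K d _ _ t ltac:(lra) Hk' H1c H2c H1b H2b).
  set (A := (L + beta) * exp (mu * (Rabs r + sigma)) * del).
  replace ((L + beta) * exp (mu * (Rabs r + sigma)) * K * (2 / (d - mu)) * del * exp (mu * Rabs t))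
    with (A * K * exp (mu * Rabs t) * (2 / (d - mu))) by (unfold A; ring).
  apply (conv_wbound G _ K d (L * Mx M1 M2 M3 + beta * Mx M1 M2 M3 + (L * Mx M1 M2 M3 + beta * Mx M1 M2 M3)) mu A t Hmu Hmd Hk').
  - intros x. apply cR_minus; [apply H1c | apply H2c].
  - intros s. eapply Rle_trans. apply Rabs_triang. rewrite Rabs_Ropp. apply Rplus_le_compat; auto.
  - unfold A. apply Rmult_le_pos; [apply Rmult_le_pos; [lra | left; apply exp_pos] | auto].
  - intros s. unfold Hop.
    set (E := del * exp (mu * (Rabs s + Rabs r + sigma))).
    assert (HE : forall y, Rabs y <= Rabs s + Rabs r + sigma -> del * exp (mu * Rabs y) <= E).
    { intros y Hy. unfold E. apply Rmult_le_compat_l; auto. apply exp_le. apply Rmult_le_compat_l; lra. }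
    assert (Hf : Rabs (f (seg (p1 Psi) (s + r)) (seg (p2 Psi) (s + r)) (seg (p3 Psi) (s + r)) -
                       f (seg (p1 Phi) (s + r)) (seg (p2 Phi) (s + r)) (seg (p3 Phi) (s + r))) <= L * E).
    { apply f_diff with (M1 := M1) (M2 := M2) (M3 := M3) (sigma := sigma); auto; try lra.
      { unfold E. apply Rmult_le_pos; auto. left; apply exp_pos. }
      intros th Hth.
      assert (Hy : Rabs (s + r + th) <= Rabs s + Rabs r + sigma).
      { eapply Rle_trans. apply Rabs_triang. eapply Rle_trans. apply Rplus_le_compat_r. apply Rabs_triang.
        rewrite (Rabs_left1 th) by lra. lra. }
      destruct (Hdp (s + r + th)) as [D1 [D2 D3]].
      assert (HE' := HE _ Hy). repeat split; lra. }
    assert (Hcm : Rabs (comp Psi (s + r) - comp Phi (s + r)) <= E).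
    { eapply Rle_trans. apply Hdc. apply HE. eapply Rle_trans. apply Rabs_triang. lra. }
    replace (f (seg (p1 Psi) (s + r)) (seg (p2 Psi) (s + r)) (seg (p3 Psi) (s + r)) + beta * comp Psi (s + r) -
      (f (seg (p1 Phi) (s + r)) (seg (p2 Phi) (s + r)) (seg (p3 Phi) (s + r)) + beta * comp Phi (s + r)))
      with ((f (seg (p1 Psi) (s + r)) (seg (p2 Psi) (s + r)) (seg (p3 Psi) (s + r)) -
             f (seg (p1 Phi) (s + r)) (seg (p2 Phi) (s + r)) (seg (p3 Phi) (s + r))) +
            beta * (comp Psi (s + r) - comp Phi (s + r))) by ring.
    eapply Rle_trans. apply Rabs_triang. rewrite Rabs_mult, (Rabs_pos_eq beta) by lra.
    replace (A * exp (mu * Rabs s)) with (L * E + beta * E).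
    2:{ unfold A, E. replace (mu * (Rabs s + Rabs r + sigma)) with (mu * (Rabs r + sigma) + mu * Rabs s) by ring.
        rewrite exp_plus. ring. }
    apply Rplus_le_compat; auto. apply Rmult_le_compat_l; lra.
Qed.

Lemma comp_facts M1 M2 M3 Phi : inBox M1 M2 M3 Phi ->
  (contR (p1 Phi) /\ forall x, Rabs (p1 Phi x) <= Mx M1 M2 M3) /\
  (contR (p2 Phi) /\ forall x, Rabs (p2 Phi x) <= Mx M1 M2 M3) /\
  (contR (p3 Phi) /\ forall x, Rabs (p3 Phi x) <= Mx M1 M2 M3).
Proof.
  intros [[C1 [C2 C3]] HB]. destruct (Mx_ge M1 M2 M3) as [A1 [A2 A3]].
  repeat split; auto; intros x; destruct (HB x) as [B1 [B2 B3]]; rewrite Rabs_pos_eq; lra.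
Qed.

Lemma box_of M1 M2 M3 Lo Up Phi : cont3 Phi -> le3 (mk3 (cst 0) (cst 0) (cst 0)) Lo -> le3 Lo Phi -> le3 Phi Up ->
  le3 Up (mk3 (cst M1) (cst M2) (cst M3)) -> inBox M1 M2 M3 Phi.
Proof.
  intros HC H0 H1 H2 H3. split; auto. intros t.
  destruct (H0 t) as [a1 [a2 a3]]. destruct (H1 t) as [b1 [b2 b3]]. destruct (H2 t) as [c1 [c2 c3]].
  destruct (H3 t) as [d1 [d2 d3]]. simpl in *. unfold cst in *. repeat split; lra.
Qed.

Lemma le3_refl A : le3 A A.
Proof. intros t. repeat split; lra. Qed.

Lemma le3_trans A B C : le3 A B -> le3 B C -> le3 A C.
Proof. intros H1 H2 t. destruct (H1 t) as [? [? ?]]. destruct (H2 t) as [? [? ?]]. repeat split; lra. Qed.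

Theorem mainTheorem4
  (sigma c D1 D2 D3 r1 r2 r3 k1 k2 k3 M1 M2 M3 : R)
  (f1 f2 f3 : (R -> R) -> (R -> R) -> (R -> R) -> R)
  (L1 L2 L3 beta1 beta2 beta3 K1 K2 K3 delta1 delta2 delta3 : R)
  (G1 G2 G3 : R -> R) (Up Lo : fn3) (mu : R) :
  0 < sigma -> 0 < c -> 0 < D1 -> 0 < D2 -> 0 < D3 ->
  0 < k1 -> 0 < k2 -> 0 < k3 -> k1 <= M1 -> k2 <= M2 -> k3 <= M3 ->
  local3 sigma f1 -> local3 sigma f2 -> local3 sigma f3 ->
  condC1 k1 k2 k3 f1 -> condC1 k1 k2 k3 f2 -> condC1 k1 k2 k3 f3 ->
  0 < L1 -> 0 < L2 -> 0 < L3 ->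
  condC2 sigma M1 M2 M3 L1 f1 -> condC2 sigma M1 M2 M3 L2 f2 -> condC2 sigma M1 M2 M3 L3 f3 ->
  0 < beta1 -> 0 < beta2 -> 0 < beta3 ->
  condPQM sigma M1 M2 M3 beta1 beta2 beta3 f1 f2 f3 ->
  0 < K1 -> 0 < K2 -> 0 < K3 -> 0 < delta1 -> 0 < delta2 -> 0 < delta3 ->
  kernelG D1 c r1 beta1 K1 delta1 G1 ->
  kernelG D2 c r2 beta2 K2 delta2 G2 ->
  kernelG D3 c r3 beta3 K3 delta3 G3 ->
  upper_lower c D1 D2 D3 r1 r2 r3 f1 f2 f3 Up Lo ->
  le3 (mk3 (cst 0) (cst 0) (cst 0)) Lo -> le3 Lo Up -> le3 Up (mk3 (cst M1) (cst M2) (cst M3)) ->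
  0 < mu -> mu < Rmin delta1 (Rmin delta2 delta3) ->
  (forall Phi, GammaSet Lo Up Phi ->
     GammaSet Lo Up (Fop3 G1 G2 G3 f1 f2 f3 beta1 beta2 beta3 r1 r2 r3 Phi) /\
     (forall t,
        p1 Lo t <= Fop G1 f1 beta1 r1 p1 Lo t /\
        Fop G1 f1 beta1 r1 p1 Lo t <= Fop G1 f1 beta1 r1 p1 Phi t /\
        Fop G1 f1 beta1 r1 p1 Phi t <= Fop G1 f1 beta1 r1 p1 Up t /\
        Fop G1 f1 beta1 r1 p1 Up t <= p1 Up t) /\
     (forall t,
        p2 Lo t <= Fop G2 f2 beta2 r2 p2 (mk3 (p1 Up) (p2 Lo) (p3 Up)) t /\
        Fop G2 f2 beta2 r2 p2 (mk3 (p1 Up) (p2 Lo) (p3 Up)) t <= Fop G2 f2 beta2 r2 p2 Phi t /\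
        Fop G2 f2 beta2 r2 p2 Phi t <= Fop G2 f2 beta2 r2 p2 (mk3 (p1 Lo) (p2 Up) (p3 Lo)) t /\
        Fop G2 f2 beta2 r2 p2 (mk3 (p1 Lo) (p2 Up) (p3 Lo)) t <= p2 Up t) /\
     (forall t,
        p3 Lo t <= Fop G3 f3 beta3 r3 p3 Lo t /\
        Fop G3 f3 beta3 r3 p3 Lo t <= Fop G3 f3 beta3 r3 p3 Phi t /\
        Fop G3 f3 beta3 r3 p3 Phi t <= Fop G3 f3 beta3 r3 p3 Up t /\
        Fop G3 f3 beta3 r3 p3 Up t <= p3 Up t)) /\
  (forall Phi, GammaSet Lo Up Phi ->
     Bmu mu (Fop3 G1 G2 G3 f1 f2 f3 beta1 beta2 beta3 r1 r2 r3 Phi)) /\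
  (forall Phi, GammaSet Lo Up Phi -> forall eps, 0 < eps ->
     exists del, 0 < del /\
       forall Psi, GammaSet Lo Up Psi ->
         Rbar_lt (mu_norm mu (sub3 Psi Phi)) (Finite del) ->
         Rbar_lt (mu_norm mu (sub3 (Fop3 G1 G2 G3 f1 f2 f3 beta1 beta2 beta3 r1 r2 r3 Psi)
                                   (Fop3 G1 G2 G3 f1 f2 f3 beta1 beta2 beta3 r1 r2 r3 Phi)))
                 (Finite eps)) /\
  (forall Phis : nat -> fn3, (forall n, GammaSet Lo Up (Phis n)) ->
     exists (sub : nat -> nat) (Lim : fn3),
       (forall n, (sub n < sub (S n))%nat) /\ Bmu mu Lim /\
       forall eps, 0 < eps -> exists N, forall n, (N <= n)%nat ->
         Rbar_lt (mu_norm mu (sub3 (Fop3 G1 G2 G3 f1 f2 f3 beta1 beta2 beta3 r1 r2 r3 (Phis (sub n))) Lim))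
                 (Finite eps)).
Proof.
  intros Hs Hc HD1 HD2 HD3 Hk1 Hk2 Hk3 HkM1 HkM2 HkM3 Hloc1 Hloc2 Hloc3 HC11 HC12 HC13
    HL1 HL2 HL3 HC21 HC22 HC23 Hb1 Hb2 Hb3 HPQM HK1 HK2 HK3 Hd1 Hd2 Hd3 HG1 HG2 HG3
    HUL H0L HLU HUM Hmu Hmud.
  assert (HM1 : 0 <= M1) by lra. assert (HM2 : 0 <= M2) by lra. assert (HM3 : 0 <= M3) by lra.
  assert (Hs0 : 0 <= sigma) by lra.
  assert (Hmd1 : mu < delta1) by (eapply Rlt_le_trans; [exact Hmud | apply Rmin_l]).
  assert (Hmd2 : mu < delta2) by (eapply Rlt_le_trans; [exact Hmud|]; eapply Rle_trans; [apply Rmin_r | apply Rmin_l]).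
  assert (Hmd3 : mu < delta3) by (eapply Rlt_le_trans; [exact Hmud|]; eapply Rle_trans; [apply Rmin_r | apply Rmin_r]).
  set (MX := Mx M1 M2 M3).
  assert (HMX : 0 <= MX) by (unfold MX, Mx; eapply Rle_trans; [exact HM1 | apply Rmax_l]).
  destruct HUL as [CU1 [CU2 [CU3 [CL1 [CL2 [CL3 Hw]]]]]].
  assert (contU : cont3 Up).
  { split; [|split]; [apply (C2_conts _ CU1) | apply (C2_conts _ CU2) | apply (C2_conts _ CU3)]. }
  assert (contL : cont3 Lo).
  { split; [|split]; [apply (C2_conts _ CL1) | apply (C2_conts _ CL2) | apply (C2_conts _ CL3)]. }
  assert (boxU := box_of M1 M2 M3 Lo Up Up contU H0L HLU (le3_refl Up) HUM).
  assert (boxL := box_of M1 M2 M3 Lo Up Lo contL H0L (le3_refl Lo) HLU HUM).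
  assert (boxG : forall Phi, GammaSet Lo Up Phi -> inBox M1 M2 M3 Phi).
  { intros Phi [HC [H1 H2]]. exact (box_of M1 M2 M3 Lo Up Phi HC H0L H1 H2 HUM). }
  set (BH1 := L1 * MX + beta1 * MX). set (BH2 := L2 * MX + beta2 * MX). set (BH3 := L3 * MX + beta3 * MX).
  assert (HBH1 : 0 <= BH1) by (unfold BH1; nra). assert (HBH2 : 0 <= BH2) by (unfold BH2; nra).
  assert (HBH3 : 0 <= BH3) by (unfold BH3; nra).
  assert (Hop1 : forall Phi, inBox M1 M2 M3 Phi -> contR (Hop f1 beta1 r1 p1 Phi) /\ forall t, Rabs (Hop f1 beta1 r1 p1 Phi t) <= BH1).
  { intros Phi HB. destruct (comp_facts _ _ _ _ HB) as [[Cc Bc] _]. split.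
    - apply Hop_cont with sigma M1 M2 M3 L1; auto; lra.
    - intros t. apply Hop_bound with sigma k1 k2 k3; auto; lra. }
  assert (Hop2 : forall Phi, inBox M1 M2 M3 Phi -> contR (Hop f2 beta2 r2 p2 Phi) /\ forall t, Rabs (Hop f2 beta2 r2 p2 Phi t) <= BH2).
  { intros Phi HB. destruct (comp_facts _ _ _ _ HB) as [_ [[Cc Bc] _]]. split.
    - apply Hop_cont with sigma M1 M2 M3 L2; auto; lra.
    - intros t. apply Hop_bound with sigma k1 k2 k3; auto; lra. }
  assert (Hop3 : forall Phi, inBox M1 M2 M3 Phi -> contR (Hop f3 beta3 r3 p3 Phi) /\ forall t, Rabs (Hop f3 beta3 r3 p3 Phi t) <= BH3).
  { intros Phi HB. destruct (comp_facts _ _ _ _ HB) as [_ [_ [Cc Bc]]]. split.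
    - apply Hop_cont with sigma M1 M2 M3 L3; auto; lra.
    - intros t. apply Hop_bound with sigma k1 k2 k3; auto; lra. }
  assert (kn1 := kernelG_kern _ _ _ _ _ _ _ HG1).
  assert (kn2 := kernelG_kern _ _ _ _ _ _ _ HG2).
  assert (kn3 := kernelG_kern _ _ _ _ _ _ _ HG3).
  assert (Hi : forall Phi, GammaSet Lo Up Phi ->
     GammaSet Lo Up (Fop3 G1 G2 G3 f1 f2 f3 beta1 beta2 beta3 r1 r2 r3 Phi) /\
     (forall t,
        p1 Lo t <= Fop G1 f1 beta1 r1 p1 Lo t /\
        Fop G1 f1 beta1 r1 p1 Lo t <= Fop G1 f1 beta1 r1 p1 Phi t /\
        Fop G1 f1 beta1 r1 p1 Phi t <= Fop G1 f1 beta1 r1 p1 Up t /\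
        Fop G1 f1 beta1 r1 p1 Up t <= p1 Up t) /\
     (forall t,
        p2 Lo t <= Fop G2 f2 beta2 r2 p2 (mk3 (p1 Up) (p2 Lo) (p3 Up)) t /\
        Fop G2 f2 beta2 r2 p2 (mk3 (p1 Up) (p2 Lo) (p3 Up)) t <= Fop G2 f2 beta2 r2 p2 Phi t /\
        Fop G2 f2 beta2 r2 p2 Phi t <= Fop G2 f2 beta2 r2 p2 (mk3 (p1 Lo) (p2 Up) (p3 Lo)) t /\
        Fop G2 f2 beta2 r2 p2 (mk3 (p1 Lo) (p2 Up) (p3 Lo)) t <= p2 Up t) /\
     (forall t,
        p3 Lo t <= Fop G3 f3 beta3 r3 p3 Lo t /\
        Fop G3 f3 beta3 r3 p3 Lo t <= Fop G3 f3 beta3 r3 p3 Phi t /\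
        Fop G3 f3 beta3 r3 p3 Phi t <= Fop G3 f3 beta3 r3 p3 Up t /\
        Fop G3 f3 beta3 r3 p3 Up t <= p3 Up t)).
  { intros Phi HPhi. assert (BP := boxG _ HPhi). destruct HPhi as [HcP [HLP HPU]].
    assert (BLUL := inBox_mix _ _ _ _ _ _ boxL boxU boxL).
    assert (BULU := inBox_mix _ _ _ _ _ _ boxU boxL boxU).
    destruct (Hop1 _ boxL) as [h1Lc h1Lb]. destruct (Hop1 _ boxU) as [h1Uc h1Ub].
    destruct (Hop1 _ BP) as [h1Pc h1Pb].
    destruct (Hop2 _ BULU) as [h2Lc h2Lb]. destruct (Hop2 _ BLUL) as [h2Uc h2Ub].
    destruct (Hop2 _ BP) as [h2Pc h2Pb].
    destruct (Hop3 _ boxL) as [h3Lc h3Lb]. destruct (Hop3 _ boxU) as [h3Uc h3Ub].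
    destruct (Hop3 _ BP) as [h3Pc h3Pb].
    assert (C1 : forall t,
        p1 Lo t <= Fop G1 f1 beta1 r1 p1 Lo t /\
        Fop G1 f1 beta1 r1 p1 Lo t <= Fop G1 f1 beta1 r1 p1 Phi t /\
        Fop G1 f1 beta1 r1 p1 Phi t <= Fop G1 f1 beta1 r1 p1 Up t /\
        Fop G1 f1 beta1 r1 p1 Up t <= p1 Up t).
    { intros t. unfold Fop. split; [|split; [|split]].
      - apply (lower_conv D1 c r1 beta1 K1 delta1 G1 (p1 Lo) _
          (fun t => f1 (seg (p1 Lo) (t + r1)) (seg (p2 Lo) (t + r1)) (seg (p3 Lo) (t + r1))) BH1 Hd1 HG1 CL1 h1Lc h1Lb).
        + intros s. reflexivity.
        + intros s. destruct (Hw s) as [_ [_ [_ [W _]]]]. exact W.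
      - apply (conv_mono G1 _ _ K1 delta1 BH1 BH1 t Hd1 kn1 h1Lc h1Pc h1Lb h1Pb).
        intros s. apply (PQ1 sigma M1 M2 M3 beta1 beta2 beta3 f1 f2 f3 HPQM); auto.
      - apply (conv_mono G1 _ _ K1 delta1 BH1 BH1 t Hd1 kn1 h1Pc h1Uc h1Pb h1Ub).
        intros s. apply (PQ1 sigma M1 M2 M3 beta1 beta2 beta3 f1 f2 f3 HPQM); auto.
      - apply (upper_conv D1 c r1 beta1 K1 delta1 G1 (p1 Up) _
          (fun t => f1 (seg (p1 Up) (t + r1)) (seg (p2 Up) (t + r1)) (seg (p3 Up) (t + r1))) BH1 Hd1 HG1 CU1 h1Uc h1Ub).
        + intros s. reflexivity.
        + intros s. destruct (Hw s) as [W _]. exact W. }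
    assert (C2 : forall t,
        p2 Lo t <= Fop G2 f2 beta2 r2 p2 (mk3 (p1 Up) (p2 Lo) (p3 Up)) t /\
        Fop G2 f2 beta2 r2 p2 (mk3 (p1 Up) (p2 Lo) (p3 Up)) t <= Fop G2 f2 beta2 r2 p2 Phi t /\
        Fop G2 f2 beta2 r2 p2 Phi t <= Fop G2 f2 beta2 r2 p2 (mk3 (p1 Lo) (p2 Up) (p3 Lo)) t /\
        Fop G2 f2 beta2 r2 p2 (mk3 (p1 Lo) (p2 Up) (p3 Lo)) t <= p2 Up t).
    { intros t. unfold Fop. split; [|split; [|split]].
      - apply (lower_conv D2 c r2 beta2 K2 delta2 G2 (p2 Lo) _
          (fun t => f2 (seg (p1 Up) (t + r2)) (seg (p2 Lo) (t + r2)) (seg (p3 Up) (t + r2))) BH2 Hd2 HG2 CL2 h2Lc h2Lb).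
        + intros s. reflexivity.
        + intros s. destruct (Hw s) as [_ [_ [_ [_ [W _]]]]]. exact W.
      - apply (conv_mono G2 _ _ K2 delta2 BH2 BH2 t Hd2 kn2 h2Lc h2Pc h2Lb h2Pb).
        intros s. apply (PQ2lo sigma M1 M2 M3 beta1 beta2 beta3 f1 f2 f3 HPQM); auto.
      - apply (conv_mono G2 _ _ K2 delta2 BH2 BH2 t Hd2 kn2 h2Pc h2Uc h2Pb h2Ub).
        intros s. apply (PQ2hi sigma M1 M2 M3 beta1 beta2 beta3 f1 f2 f3 HPQM); auto.
      - apply (upper_conv D2 c r2 beta2 K2 delta2 G2 (p2 Up) _
          (fun t => f2 (seg (p1 Lo) (t + r2)) (seg (p2 Up) (t + r2)) (seg (p3 Lo) (t + r2))) BH2 Hd2 HG2 CU2 h2Uc h2Ub).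
        + intros s. reflexivity.
        + intros s. destruct (Hw s) as [_ [W _]]. exact W. }
    assert (C3 : forall t,
        p3 Lo t <= Fop G3 f3 beta3 r3 p3 Lo t /\
        Fop G3 f3 beta3 r3 p3 Lo t <= Fop G3 f3 beta3 r3 p3 Phi t /\
        Fop G3 f3 beta3 r3 p3 Phi t <= Fop G3 f3 beta3 r3 p3 Up t /\
        Fop G3 f3 beta3 r3 p3 Up t <= p3 Up t).
    { intros t. unfold Fop. split; [|split; [|split]].
      - apply (lower_conv D3 c r3 beta3 K3 delta3 G3 (p3 Lo) _
          (fun t => f3 (seg (p1 Lo) (t + r3)) (seg (p2 Lo) (t + r3)) (seg (p3 Lo) (t + r3))) BH3 Hd3 HG3 CL3 h3Lc h3Lb).
        + intros s. reflexivity.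
        + intros s. destruct (Hw s) as [_ [_ [_ [_ [_ W]]]]]. exact W.
      - apply (conv_mono G3 _ _ K3 delta3 BH3 BH3 t Hd3 kn3 h3Lc h3Pc h3Lb h3Pb).
        intros s. apply (PQ3 sigma M1 M2 M3 beta1 beta2 beta3 f1 f2 f3 HPQM); auto.
      - apply (conv_mono G3 _ _ K3 delta3 BH3 BH3 t Hd3 kn3 h3Pc h3Uc h3Pb h3Ub).
        intros s. apply (PQ3 sigma M1 M2 M3 beta1 beta2 beta3 f1 f2 f3 HPQM); auto.
      - apply (upper_conv D3 c r3 beta3 K3 delta3 G3 (p3 Up) _
          (fun t => f3 (seg (p1 Up) (t + r3)) (seg (p2 Up) (t + r3)) (seg (p3 Up) (t + r3))) BH3 Hd3 HG3 CU3 h3Uc h3Ub).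
        + intros s. reflexivity.
        + intros s. destruct (Hw s) as [_ [_ [W _]]]. exact W. }
    split; [| split; [exact C1 | split; [exact C2 | exact C3]]].
    split; [|split].
    - split; [|split]; simpl; unfold Fop.
      + apply (conv_cont D1 c r1 beta1 K1 delta1); auto. exists BH1; auto.
      + apply (conv_cont D2 c r2 beta2 K2 delta2); auto. exists BH2; auto.
      + apply (conv_cont D3 c r3 beta3 K3 delta3); auto. exists BH3; auto.
    - intros t. simpl. destruct (C1 t) as [a1 [a2 _]]. destruct (C2 t) as [b1 [b2 _]].
      destruct (C3 t) as [c1 [c2 _]]. repeat split; lra.
    - intros t. simpl. destruct (C1 t) as [_ [_ [a1 a2]]]. destruct (C2 t) as [_ [_ [b1 b2]]].
      destruct (C3 t) as [_ [_ [c1 c2]]]. repeat split; lra. }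
  assert (FB : forall Phi, GammaSet Lo Up Phi ->
    inBox M1 M2 M3 (Fop3 G1 G2 G3 f1 f2 f3 beta1 beta2 beta3 r1 r2 r3 Phi)).
  { intros Phi HP. destruct (Hi _ HP) as [HG _]. apply boxG; auto. }
  assert (Hexp1 : forall t, exp (- mu * Rabs t) <= 1).
  { intros t. rewrite <- exp_0. apply exp_le. generalize (Rabs_pos t). nra. }
  assert (Hexpm : forall t, exp (- mu * Rabs t) * exp (mu * Rabs t) = 1).
  { intros t. rewrite <- exp_plus. replace (- mu * Rabs t + mu * Rabs t) with 0 by ring. apply exp_0. }
  split; [exact Hi|]. split; [|split].
  - intros Phi HP. destruct (Hi _ HP) as [[HGc _] _]. split; auto.
    destruct (comp_facts _ _ _ _ (FB _ HP)) as [[_ b1] [[_ b2] [_ b3]]].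
    apply (mu_norm_le mu _ MX). intros t. assert (V := vnorm_le _ _ _ _ (b1 t) (b2 t) (b3 t)).
    assert (E := Hexp1 t). assert (P := exp_pos (- mu * Rabs t)).
    assert (0 <= vnorm (p1 (Fop3 G1 G2 G3 f1 f2 f3 beta1 beta2 beta3 r1 r2 r3 Phi) t)
             (p2 (Fop3 G1 G2 G3 f1 f2 f3 beta1 beta2 beta3 r1 r2 r3 Phi) t)
             (p3 (Fop3 G1 G2 G3 f1 f2 f3 beta1 beta2 beta3 r1 r2 r3 Phi) t)).
    { eapply Rle_trans. apply Rabs_pos. apply vnorm_ge. }
    unfold MX in *. nra.
  - intros Phi HP eps He.
    set (C1 := (L1 + beta1) * exp (mu * (Rabs r1 + sigma)) * K1 * (2 / (delta1 - mu))).
    set (C2 := (L2 + beta2) * exp (mu * (Rabs r2 + sigma)) * K2 * (2 / (delta2 - mu))).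
    set (C3 := (L3 + beta3) * exp (mu * (Rabs r3 + sigma)) * K3 * (2 / (delta3 - mu))).
    assert (HC1p : 0 <= C1).
    { unfold C1. repeat apply Rmult_le_pos; try lra; try (left; apply exp_pos).
      left; apply Rinv_0_lt_compat; lra. }
    assert (HC2p : 0 <= C2).
    { unfold C2. repeat apply Rmult_le_pos; try lra; try (left; apply exp_pos).
      left; apply Rinv_0_lt_compat; lra. }
    assert (HC3p : 0 <= C3).
    { unfold C3. repeat apply Rmult_le_pos; try lra; try (left; apply exp_pos).
      left; apply Rinv_0_lt_compat; lra. }
    set (del := eps / (2 * (C1 + C2 + C3 + 1))).
    assert (Hdel : 0 < del) by (unfold del; apply Rdiv_lt_0_compat; lra).
    assert (HCd : forall C, 0 <= C -> C <= C1 + C2 + C3 -> C * del <= eps / 2).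
    { intros C HC HCs. unfold del.
      replace (C * (eps / (2 * (C1 + C2 + C3 + 1)))) with ((eps / 2) * (C / (C1 + C2 + C3 + 1))) by (field; lra).
      assert (C / (C1 + C2 + C3 + 1) <= 1). { apply Rmult_le_reg_r with (C1 + C2 + C3 + 1); [lra|]. field_simplify; lra. }
      nra. }
    exists del. split; auto. intros Psi HPs Hlt.
    assert (Hpw := mu_ptw_comp mu (sub3 Psi Phi) del Hlt). simpl in Hpw.
    assert (BP := boxG _ HP). assert (BPs := boxG _ HPs).
    destruct (comp_facts _ _ _ _ BP) as [[c1 b1] [[c2 b2] [c3 b3]]].
    destruct (comp_facts _ _ _ _ BPs) as [[c1' b1'] [[c2' b2'] [c3' b3']]].
    assert (E1 := compF_lip sigma M1 M2 M3 L1 k1 k2 k3 f1 beta1 r1 p1 D1 c K1 delta1 G1 mu Phi Psi del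
       Hs0 HM1 HM2 HM3 HL1 Hb1 Hmu Hmd1 ltac:(lra) HG1 HC11 HC21 BP BPs c1 c1' b1 b1' Hpw (fun x => proj1 (Hpw x))).
    assert (E2 := compF_lip sigma M1 M2 M3 L2 k1 k2 k3 f2 beta2 r2 p2 D2 c K2 delta2 G2 mu Phi Psi del
       Hs0 HM1 HM2 HM3 HL2 Hb2 Hmu Hmd2 ltac:(lra) HG2 HC12 HC22 BP BPs c2 c2' b2 b2' Hpw (fun x => proj1 (proj2 (Hpw x)))).
    assert (E3 := compF_lip sigma M1 M2 M3 L3 k1 k2 k3 f3 beta3 r3 p3 D3 c K3 delta3 G3 mu Phi Psi del
       Hs0 HM1 HM2 HM3 HL3 Hb3 Hmu Hmd3 ltac:(lra) HG3 HC13 HC23 BP BPs c3 c3' b3 b3' Hpw (fun x => proj2 (proj2 (Hpw x)))).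
    fold C1 in E1. fold C2 in E2. fold C3 in E3.
    apply (mu_norm_lt mu _ (eps / 2) eps); [| lra].
    intros t. simpl. assert (P := exp_pos (- mu * Rabs t)).
    assert (Hgen : forall C x, 0 <= C -> C <= C1 + C2 + C3 -> Rabs x <= C * del * exp (mu * Rabs t) ->
              exp (- mu * Rabs t) * Rabs x <= eps / 2).
    { intros C x HC HCs Hx. eapply Rle_trans. apply Rmult_le_compat_l. lra. exact Hx.
      replace (exp (- mu * Rabs t) * (C * del * exp (mu * Rabs t))) with (C * del * (exp (- mu * Rabs t) * exp (mu * Rabs t))) by ring.
      rewrite Hexpm, Rmult_1_r. apply HCd; auto. }
    apply vnorm_scaled.
    + apply (Hgen C1); auto; lra.
    + apply (Hgen C2); auto; lra.
    + apply (Hgen C3); auto; lra.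
  - intros Phis HPh.
    set (u1 := fun n t => Fop G1 f1 beta1 r1 p1 (Phis n) t).
    set (u2 := fun n t => Fop G2 f2 beta2 r2 p2 (Phis n) t).
    set (u3 := fun n t => Fop G3 f3 beta3 r3 p3 (Phis n) t).
    assert (Hub : forall n t, Rabs (u1 n t) <= MX /\ Rabs (u2 n t) <= MX /\ Rabs (u3 n t) <= MX).
    { intros n t. destruct (comp_facts _ _ _ _ (FB _ (HPh n))) as [[_ b1] [[_ b2] [_ b3]]].
      split; [|split]; [exact (b1 t) | exact (b2 t) | exact (b3 t)]. }
    assert (Heq1 : equi u1).
    { intros eps He. destruct (conv_equi G1 K1 delta1 BH1 HK1 Hd1 kn1 HBH1 eps He) as [d [Hd Hu]].
      exists d. split; auto. intros n t t' Htt. unfold u1, Fop.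
      destruct (Hop1 _ (boxG _ (HPh n))) as [hc hb]. apply Hu; auto. }
    assert (Heq2 : equi u2).
    { intros eps He. destruct (conv_equi G2 K2 delta2 BH2 HK2 Hd2 kn2 HBH2 eps He) as [d [Hd Hu]].
      exists d. split; auto. intros n t t' Htt. unfold u2, Fop.
      destruct (Hop2 _ (boxG _ (HPh n))) as [hc hb]. apply Hu; auto. }
    assert (Heq3 : equi u3).
    { intros eps He. destruct (conv_equi G3 K3 delta3 BH3 HK3 Hd3 kn3 HBH3 eps He) as [d [Hd Hu]].
      exists d. split; auto. intros n t t' Htt. unfold u3, Fop.
      destruct (Hop3 _ (boxG _ (HPh n))) as [hc hb]. apply Hu; auto. }
    destruct (AA u1 MX (fun n t => proj1 (Hub n t)) Heq1) as [ph1 [Hph1 [v1 Hv1]]].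
    destruct (AA (fun n => u2 (ph1 n)) MX (fun n t => proj1 (proj2 (Hub (ph1 n) t))) (equi_sub u2 ph1 Heq2))
      as [ph2 [Hph2 [v2 Hv2]]].
    destruct (AA (fun n => u3 (ph1 (ph2 n))) MX (fun n t => proj2 (proj2 (Hub (ph1 (ph2 n)) t)))
      (equi_sub u3 (fun n => ph1 (ph2 n)) Heq3)) as [ph3 [Hph3 [v3 Hv3]]].
    set (sb := fun n => ph1 (ph2 (ph3 n))).
    assert (U1 : UCC (fun n => u1 (sb n)) v1).
    { exact (UCC_sub (fun n => u1 (ph1 n)) v1 (fun n => ph2 (ph3 n)) Hv1 (incr_comp ph2 ph3 Hph2 Hph3)). }
    assert (U2 : UCC (fun n => u2 (sb n)) v2).
    { exact (UCC_sub (fun n => u2 (ph1 (ph2 n))) v2 ph3 Hv2 Hph3). }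
    assert (U3 : UCC (fun n => u3 (sb n)) v3) by exact Hv3.
    assert (vb1 := lim_bound (fun n => u1 (ph1 n)) v1 MX (fun n t => proj1 (Hub (ph1 n) t)) Hv1).
    assert (vb2 := lim_bound (fun n => u2 (ph1 (ph2 n))) v2 MX (fun n t => proj1 (proj2 (Hub (ph1 (ph2 n)) t))) Hv2).
    assert (vb3 := lim_bound (fun n => u3 (sb n)) v3 MX (fun n t => proj2 (proj2 (Hub (sb n) t))) Hv3).
    exists sb, (mk3 v1 v2 v3). split; [|split].
    + exact (incr_comp ph1 (fun n => ph2 (ph3 n)) Hph1 (incr_comp ph2 ph3 Hph2 Hph3)).
    + split.
      * split; [|split]; simpl.
        -- exact (lim_cont (fun n => u1 (ph1 n)) v1 (equi_sub u1 ph1 Heq1) Hv1).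
        -- exact (lim_cont (fun n => u2 (ph1 (ph2 n))) v2 (equi_sub u2 (fun n => ph1 (ph2 n)) Heq2) Hv2).
        -- exact (lim_cont (fun n => u3 (sb n)) v3 (equi_sub u3 sb Heq3) Hv3).
      * apply (mu_norm_le mu _ MX). intros t. simpl.
        assert (V := vnorm_le _ _ _ _ (vb1 t) (vb2 t) (vb3 t)).
        assert (E := Hexp1 t). assert (P := exp_pos (- mu * Rabs t)).
        assert (0 <= vnorm (v1 t) (v2 t) (v3 t)).
        { eapply Rle_trans. apply Rabs_pos. apply vnorm_ge. }
        nra.
    + intros eps He.
      destruct (weighted (fun n => u1 (sb n)) v1 MX mu HMX Hmu (fun n t => proj1 (Hub (sb n) t)) vb1 U1 (eps / 2)) as [N1 HN1]. { lra. }
      destruct (weighted (fun n => u2 (sb n)) v2 MX mu HMX Hmu (fun n t => proj1 (proj2 (Hub (sb n) t))) vb2 U2 (eps / 2)) as [N2 HN2]. { lra. }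
      destruct (weighted (fun n => u3 (sb n)) v3 MX mu HMX Hmu (fun n t => proj2 (proj2 (Hub (sb n) t))) vb3 U3 (eps / 2)) as [N3 HN3]. { lra. }
      exists (Nat.max N1 (Nat.max N2 N3)). intros n Hn.
      apply (mu_norm_lt mu _ (eps / 2) eps); [| lra].
      intros t. simpl. apply vnorm_scaled.
      * apply (HN1 n). lia.
      * apply (HN2 n). lia.
      * apply (HN3 n). lia.
Qed.
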